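(* Let $R$ be a ring and let $P$ be a polygon divided into subpolygons $P^1,\ldots,P^{\kappa+1}$ by the dissection $E=\{(t_1,v_1),(v_1,t_1),\ldots,(t_\kappa,v_\kappa),(v_\kappa,t_\kappa)\}$ for some $\kappa\geqslant0$. For each $\alpha$ let $c^\alpha:\operatorname{diag}P^\alpha\to R^*$ be a frieze, and assume $c^\alpha_{tv}=c^\beta_{tv}$ whenever $(t,v)\in E\cap\operatorname{diag}P^\alpha\cap\operatorname{diag}P^\beta$. Then there exists a unique map $c:\operatorname{diag}P\to R$ such that (i) $c|_{\operatorname{diag}P^\alpha}=c^\alpha$ for each $\alpha$, and (ii) $c$ is a weak frieze with respect to $E$. Moreover, if this $c$ takes all its values in $R^*$, then $c$ is a frieze.
   Context: $R^*$ denotes the invertible elements of $R$. A polygon $P$ is a finite set of at least three vertices with a cyclic ordering (thought of as a convex polygon in the plane); a subpolygon is a subset of at least three vertices with the induced cyclic ordering. $\operatorname{diag}P$ is the set of ordered pairs of distinct vertices (diagonals). A diagonal is an edge if its endpoints are neighbours, otherwise internal. $(i,k)$ and $(j,\ell)$ cross if $i,j,k,\ell$ are pairwise distinct with $i<j<k<\ell$ or $i<\ell<k<j$ cyclically. A dissection is a set of internal diagonals closed under reversal with no two crossing; it divides $P$ into the subpolygons whose edges are diagonals in the dissection or edges of $P$. Write $c_{ik}=c(i,k)$, $c_{xx}=0$. A map $c:\operatorname{diag}P\to R^*$ is a frieze if for all pairwise distinct $i,j,k$: $c_{ij}c_{kj}^{-1}c_{ki}=c_{ik}c_{jk}^{-1}c_{ji}$,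 and whenever $(i,k)$ and $(j,\ell)$ cross: $c_{ik}=c_{ij}c_{\ell j}^{-1}c_{\ell k}+c_{i\ell}c_{j\ell}^{-1}c_{jk}$. A map $c:\operatorname{diag}P\to R$ is a weak frieze with respect to a dissection $D$ if $c_{tv}\in R^*$ for $(t,v)\in D$ and whenever $(i,k)$ crosses $(t,v)$ with $(t,v),(v,t)\in D$, $c_{ik}=c_{it}c_{vt}^{-1}c_{vk}+c_{iv}c_{tv}^{-1}c_{tk}$. *)

(* Defs.v *)
(* Polygon P = vertices 'I_n (n >= 3) with the cyclic order
   0 < 1 < ... < n-1 < 0.  Subpolygons are subsets {set 'I_n} with the induced
   cyclic order.  A map on diagonals is a function 'I_n -> 'I_n -> R of which
   only the values at pairs of distinct vertices matter. *)
From HB Require Import structures.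
From mathcomp Require Import all_boot all_order all_algebra.
Set Implicit Arguments. Unset Strict Implicit. Unset Printing Implicit Defensive.
Import Order.TTheory GRing.Theory Num.Theory.
Local Open Scope ring_scope.

Definition cyc3 (a b c : nat) : bool :=
  [|| (a < b < c)%N, (b < c < a)%N | (c < a < b)%N].

Definition cyc4 (a b c d : nat) : bool :=
  [|| (a < b < c)%N && (c < d)%N, (b < c < d)%N && (d < a)%N,
      (c < d < a)%N && (a < b)%N | (d < a < b)%N && (b < c)%N].

Section Polygon.
Variable n : nat.

Definition crossb (i k j l : 'I_n) : bool := cyc4 i j k l || cyc4 i l k j.

Definition neighb (Q : {set 'I_n}) (i j : 'I_n) : bool :=
  [&& i \in Q, j \in Q, i != j &
     [forall x in Q, ~~ cyc3 i x j] || [forall x in Q, ~~ cyc3 j x i]].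

Definition edgeP (i j : 'I_n) : bool := neighb [set: 'I_n] i j.

Definition internal (i j : 'I_n) : bool := (i != j) && ~~ edgeP i j.

Definition dissection (D : {set 'I_n * 'I_n}) : Prop :=
  [/\ forall i j, (i, j) \in D -> internal i j,
      forall i j, (i, j) \in D -> (j, i) \in D &
      forall i k j l, (i, k) \in D -> (j, l) \in D -> ~~ crossb i k j l].

(* Q is one of the subpolygons into which the dissection D divides P:
   its edges are diagonals of D or edges of P, and no diagonal of D is an
   internal diagonal of Q. *)
Definition cell (D : {set 'I_n * 'I_n}) (Q : {set 'I_n}) : Prop :=
  [/\ (3 <= #|Q|)%N,
      forall i j, neighb Q i j -> edgeP i j || ((i, j) \in D) &
      forall i j, i \in Q -> j \in Q -> i != j -> ~~ neighb Q i j ->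
        (i, j) \notin D].

Variable R : unitRingType.

Definition frieze (Q : {set 'I_n}) (c : 'I_n -> 'I_n -> R) : Prop :=
  [/\ forall i j, i \in Q -> j \in Q -> i != j -> c i j \is a GRing.unit,
      forall i j k, i \in Q -> j \in Q -> k \in Q ->
        i != j -> j != k -> i != k ->
        c i j * (c k j)^-1 * c k i = c i k * (c j k)^-1 * c j i &
      forall i j k l, i \in Q -> j \in Q -> k \in Q -> l \in Q ->
        crossb i k j l ->
        c i k = c i j * (c l j)^-1 * c l k + c i l * (c j l)^-1 * c j k].

Definition weak_frieze (D : {set 'I_n * 'I_n}) (c : 'I_n -> 'I_n -> R) : Prop :=
  (forall t v, (t, v) \in D -> c t v \is a GRing.unit) /\
  (forall i k t v, (t, v) \in D -> (v, t) \in D -> crossb i k t v ->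
     c i k = c i t * (c v t)^-1 * c v k + c i v * (c t v)^-1 * c t k).

Definition glued (kappa : nat) (E : {set 'I_n * 'I_n})
  (Pa : 'I_kappa.+1 -> {set 'I_n}) (ca : 'I_kappa.+1 -> 'I_n -> 'I_n -> R)
  (c : 'I_n -> 'I_n -> R) : Prop :=
  (forall a i j, i \in Pa a -> j \in Pa a -> i != j -> c i j = ca a i j) /\
  weak_frieze E c.

End Polygon.

(* Main.v *)
Require Import Defs.
From HB Require Import structures.
From mathcomp Require Import all_boot all_order all_algebra.
From mathcomp Require Import zify.
Import GRing.Theory.
Set Implicit Arguments. Unset Strict Implicit. Unset Printing Implicit Defensive.

Inductive fm : Type :=
  FLt of nat & nat | FEq of nat & nat | FNot of fm | FAnd of fm & fm
| FOr of fm & fm | FImp of fm & fm | FXor of fm & fm | FIff of fm & fm | FT | FF.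

Fixpoint ev (e : nat -> nat) (f : fm) : bool :=
  match f with
  | FLt a b => e a < e b
  | FEq a b => e a == e b
  | FNot g => ~~ ev e g
  | FAnd g h => ev e g && ev e h
  | FOr g h => ev e g || ev e h
  | FImp g h => ev e g ==> ev e h
  | FXor g h => ev e g (+) ev e h
  | FIff g h => ev e g == ev e h
  | FT => true
  | FF => false
  end.

Fixpoint mv (f : fm) : nat :=
  match f with
  | FLt a b | FEq a b => maxn a.+1 b.+1
  | FNot g => mv g
  | FAnd g h | FOr g h | FImp g h | FXor g h | FIff g h => maxn (mv g) (mv h)
  | FT | FF => 0
  end.

Lemma ev_mono e e' f :
  (forall i j, i < mv f -> j < mv f ->
     (e i < e j) = (e' i < e' j) /\ (e i == e j) = (e' i == e' j)) ->
  ev e f = ev e' f.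
Proof.
elim: f => [a b|a b|g IH|g IHg h IHh|g IHg h IHh|g IHg h IHh|g IHg h IHh|g IHg h IHh||] /= H.
- by case: (H a b); rewrite ?leq_max ?ltnSn ?orbT.
- by case: (H a b); rewrite ?leq_max ?ltnSn ?orbT.
- by rewrite IH.
- rewrite IHg ?IHh // => i j Hi Hj; apply: H; rewrite leq_max ?Hi ?Hj ?orbT //.
- rewrite IHg ?IHh // => i j Hi Hj; apply: H; rewrite leq_max ?Hi ?Hj ?orbT //.
- rewrite IHg ?IHh // => i j Hi Hj; apply: H; rewrite leq_max ?Hi ?Hj ?orbT //.
- rewrite IHg ?IHh // => i j Hi Hj; apply: H; rewrite leq_max ?Hi ?Hj ?orbT //.
- rewrite IHg ?IHh // => i j Hi Hj; apply: H; rewrite leq_max ?Hi ?Hj ?orbT //.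
- by [].
- by [].
Qed.

Lemma count_lt_strict (s : seq nat) u w :
  u \in s -> u < w -> count (fun z => z < u) s < count (fun z => z < w) s.
Proof.
elim: s => [//|x s IH]; rewrite inE /= => /orP [/eqP <-|us] uw.
- rewrite ltnn uw add0n add1n ltnS; apply: sub_count => z /= zu.
  exact: ltn_trans zu uw.
- rewrite -addnS; apply: leq_add; last exact: IH.
  by case: (ltnP x u) => // xu; rewrite (ltn_trans xu uw).
Qed.

Definition rk (s : seq nat) (v : nat) := count (fun z => z < v) s.

Lemma rk_lt s u w : u \in s -> w \in s -> (u < w) = (rk s u < rk s w).
Proof.
move=> us ws; case: (ltngtP u w) => [uw|wu|->].
- by rewrite count_lt_strict.
- by apply/esym/negbTE; rewrite -leqNgt ltnW // count_lt_strict.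
- by rewrite ltnn.
Qed.

Lemma rk_eq s u w : u \in s -> w \in s -> (u == w) = (rk s u == rk s w).
Proof.
move=> us ws; case: (ltngtP u w) => [uw|wu|->].
- by apply/esym/negbTE; rewrite neq_ltn; apply/orP; left; exact: count_lt_strict.
- by apply/esym/negbTE; rewrite neq_ltn; apply/orP; right; exact: count_lt_strict.
- by rewrite eqxx.
Qed.

Lemma rk_bound s u : u \in s -> rk s u < size s.
Proof.
move=> us; apply: (leq_trans (count_lt_strict us (ltnSn u))).
exact: count_size.
Qed.

Fixpoint chk (f : fm) (k m : nat) (pre : seq nat) : bool :=
  match m with
  | 0 => ev (nth 0 pre) f
  | m'.+1 => all (fun x => chk f k m' (rcons pre x)) (iota 0 k)
  end.

Lemma chk_sound_gen f k m pre : chk f k m pre ->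
  forall l, size l = m -> all (fun x => x < k) l -> ev (nth 0 (pre ++ l)) f.
Proof.
elim: m pre => [|m IH] pre /=.
- by move=> H [|//] _ _; rewrite cats0.
- move=> /allP H [//|x l] [sl] /= /andP [xk lk].
  rewrite -cat_rcons; apply: IH => //; apply: H.
  by rewrite mem_iota.
Qed.

Lemma chk_sound f k : chk f k k [::] -> mv f <= k -> forall e, ev e f.
Proof.
move=> Hc Hk e.
set s := undup [seq e i | i <- iota 0 k].
have ins i : i < k -> e i \in s.
  by move=> ik; rewrite mem_undup; apply: map_f; rewrite mem_iota.
have szs : size s <= k.
  by rewrite (leq_trans (size_undup _)) // size_map size_iota.
set l := [seq rk s (e i) | i <- iota 0 k].
have := chk_sound_gen Hc (l := l).
rewrite /l size_map size_iota => /(_ erefl) /=.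
have -> : all (fun x => x < k) [seq rk s (e i) | i <- iota 0 k].
  apply/allP => x /mapP [i]; rewrite mem_iota add0n => /andP [_ ik] ->.
  exact: leq_trans (rk_bound (ins _ ik)) szs.
move=> /(_ isT) H; suff <- : ev (nth 0 ([::] ++ l)) f = ev e f by [].
apply: ev_mono => i j Hi Hj.
have ik := leq_trans Hi Hk; have jk := leq_trans Hj Hk.
rewrite !(nth_map 0) ?size_iota // !nth_iota // !add0n.
by rewrite -(rk_lt (ins _ ik) (ins _ jk)) -(rk_eq (ins _ ik) (ins _ jk)).
Qed.

Definition C3 a b c := FOr (FAnd (FLt a b) (FLt b c)) (FOr (FAnd (FLt b c) (FLt c a)) (FAnd (FLt c a) (FLt a b))).
Definition C4 a b c d :=
  FOr (FAnd (FAnd (FLt a b) (FLt b c)) (FLt c d))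
  (FOr (FAnd (FAnd (FLt b c) (FLt c d)) (FLt d a))
  (FOr (FAnd (FAnd (FLt c d) (FLt d a)) (FLt a b))
       (FAnd (FAnd (FLt d a) (FLt a b)) (FLt b c)))).
Definition CR i k j l := FOr (C4 i j k l) (C4 i l k j).

Definition crn (i k j l : nat) := cyc4 i j k l || cyc4 i l k j.

Ltac rgeo F K l :=
  let H := fresh in
  assert (H : chk F K K [::]) by (vm_compute; reflexivity);
  exact (@chk_sound F K H erefl (nth 0 l)).

Lemma g_sym1 i k j l : crn i k j l = crn k i j l.
Proof. apply/eqP; rgeo (FIff (CR 0 1 2 3) (CR 1 0 2 3)) 4 [:: i; k; j; l]. Qed.
Lemma g_sym2 i k j l : crn i k j l = crn i k l j.
Proof. apply/eqP; rgeo (FIff (CR 0 1 2 3) (CR 0 1 3 2)) 4 [:: i; k; j; l]. Qed.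
Lemma g_sym3 i k j l : crn i k j l = crn j l i k.
Proof. apply/eqP; rgeo (FIff (CR 0 1 2 3) (CR 2 3 0 1)) 4 [:: i; k; j; l]. Qed.

Lemma g_dist i k j l :
  crn i k j l ==> [&& i != k, i != j, i != l, k != j, k != l & j != l].
Proof.
rgeo (FImp (CR 0 1 2 3) (FAnd (FNot (FEq 0 1)) (FAnd (FNot (FEq 0 2))
  (FAnd (FNot (FEq 0 3)) (FAnd (FNot (FEq 1 2)) (FAnd (FNot (FEq 1 3)) (FNot (FEq 2 3))))))))
  4 [:: i; k; j; l].
Qed.

Lemma g_conf i k t v t' v' :
  cyc4 i t k v ==> (cyc4 i t' k v' ==> (~~ crn t v t' v' ==>
  ((((t' == t) || cyc3 t t' k) && ((v' == v) || cyc3 k v' v)) ||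
   (((t == t') || cyc3 t' t k) && ((v == v') || cyc3 k v v'))))).
Proof.
rgeo (FImp (C4 0 2 1 3) (FImp (C4 0 4 1 5) (FImp (FNot (CR 2 3 4 5))
  (FOr (FAnd (FOr (FEq 4 2) (C3 2 4 1)) (FOr (FEq 5 3) (C3 1 5 3)))
       (FAnd (FOr (FEq 2 4) (C3 4 2 1)) (FOr (FEq 3 5) (C3 1 3 5)))))))
  6 [:: i; k; t; v; t'; v'].
Qed.

Lemma g_c1a i k t v t' : cyc4 i t k v ==> (cyc3 t t' k ==> crn i t' t v).
Proof. rgeo (FImp (C4 0 2 1 3) (FImp (C3 2 4 1) (CR 0 4 2 3))) 5 [:: i; k; t; v; t']. Qed.

Lemma g_c1b i k t v v' : cyc4 i t k v ==> (cyc3 k v' v ==> crn i v' t v).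
Proof. rgeo (FImp (C4 0 2 1 3) (FImp (C3 1 4 3) (CR 0 4 2 3))) 5 [:: i; k; t; v; v']. Qed.

Lemma g_c1c i k t v t' v' :
  cyc4 i t k v ==> (cyc4 i t' k v' ==> (cyc3 t t' k ==> crn t k t' v')).
Proof.
rgeo (FImp (C4 0 2 1 3) (FImp (C4 0 4 1 5) (FImp (C3 2 4 1) (CR 2 1 4 5))))
  6 [:: i; k; t; v; t'; v'].
Qed.

Lemma g_c1d i k t v t' v' :
  cyc4 i t k v ==> (cyc4 i t' k v' ==> (cyc3 k v' v ==> crn v k t' v')).
Proof.
rgeo (FImp (C4 0 2 1 3) (FImp (C4 0 4 1 5) (FImp (C3 1 5 3) (CR 3 1 4 5))))
  6 [:: i; k; t; v; t'; v'].
Qed.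

Lemma g_L3 i k a b x y :
  crn i k a b ==> (~~ crn a b x y ==> (crn i a x y ==> crn i k x y)).
Proof.
rgeo (FImp (CR 0 1 2 3) (FImp (FNot (CR 2 3 4 5)) (FImp (CR 0 2 4 5) (CR 0 1 4 5))))
  6 [:: i; k; a; b; x; y].
Qed.

Lemma g_P1 x1 x2 t v u :
  crn x1 x2 t v ==> ((u != t) ==> ((u != v) ==> (crn u x1 t v || crn u x2 t v))).
Proof.
rgeo (FImp (CR 0 1 2 3) (FImp (FNot (FEq 4 2)) (FImp (FNot (FEq 4 3))
  (FOr (CR 4 0 2 3) (CR 4 1 2 3))))) 5 [:: x1; x2; t; v; u].
Qed.

Lemma g_P2 u r t v a b :
  crn u r t v ==> (crn u t a b ==> (~~ crn a b t v ==> crn u r a b)).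
Proof.
rgeo (FImp (CR 0 1 2 3) (FImp (CR 0 2 4 5) (FImp (FNot (CR 4 5 2 3)) (CR 0 1 4 5))))
  6 [:: u; r; t; v; a; b].
Qed.

Lemma g_tri p x q : (x != p) ==> ((x != q) ==> ((p != q) ==> (cyc3 p x q || cyc3 q x p))).
Proof.
rgeo (FImp (FNot (FEq 1 0)) (FImp (FNot (FEq 1 2)) (FImp (FNot (FEq 0 2))
  (FOr (C3 0 1 2) (C3 2 1 0))))) 3 [:: p; x; q].
Qed.

Lemma g_asym p x q : cyc3 p x q ==> ~~ cyc3 q x p.
Proof. rgeo (FImp (C3 0 1 2) (FNot (C3 2 1 0))) 3 [:: p; x; q]. Qed.

Lemma g_c3dist a b c : cyc3 a b c ==> [&& a != b, b != c & a != c].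
Proof.
rgeo (FImp (C3 0 1 2) (FAnd (FNot (FEq 0 1)) (FAnd (FNot (FEq 1 2)) (FNot (FEq 0 2)))))
  3 [:: a; b; c].
Qed.

Lemma g_c3rot a b c : cyc3 a b c = cyc3 b c a.
Proof. apply/eqP; rgeo (FIff (C3 0 1 2) (C3 1 2 0)) 3 [:: a; b; c]. Qed.

Lemma g_cr_cyc p r1 q x : cyc3 p r1 q ==> (cyc3 q x p ==> crn r1 x p q).
Proof. rgeo (FImp (C3 0 1 2) (FImp (C3 2 3 0) (CR 1 3 0 2))) 4 [:: p; r1; q; x]. Qed.

Lemma g_orient z x a b :
  crn z x a b ==> ((cyc3 a z b && cyc3 b x a) || (cyc3 b z a && cyc3 a x b)).
Proof.
rgeo (FImp (CR 0 1 2 3) (FOr (FAnd (C3 2 0 3) (C3 3 1 2)) (FAnd (C3 3 0 2) (C3 2 1 3))))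
  4 [:: z; x; a; b].
Qed.

Lemma g_maxarc1 a b a' b' x z :
  ~~ crn a b a' b' ==> (cyc3 a' a b' ==> (cyc3 b' x a' ==> (cyc3 a z b ==>
  (~~ cyc3 a x b ==> ((x != a) ==> ((a != b) ==>
  (cyc3 a' z b' && (cyc3 a b b' || (b == b'))))))))).
Proof.
rgeo (FImp (FNot (CR 0 1 2 3)) (FImp (C3 2 0 3) (FImp (C3 3 4 2) (FImp (C3 0 5 1)
  (FImp (FNot (C3 0 4 1)) (FImp (FNot (FEq 4 0)) (FImp (FNot (FEq 0 1))
  (FAnd (C3 2 5 3) (FOr (C3 0 1 3) (FEq 1 3))))))))))
  6 [:: a; b; a'; b'; x; z].
Qed.

Lemma g_maxarc2 a b a' b' x z :
  ~~ crn a b a' b' ==> (cyc3 a' b b' ==> (cyc3 b' x a' ==> (cyc3 a z b ==>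
  (~~ cyc3 a x b ==> ((x != b) ==> ((a != b) ==>
  (cyc3 a' z b' && (cyc3 a' a b || (a == a'))))))))).
Proof.
rgeo (FImp (FNot (CR 0 1 2 3)) (FImp (C3 2 1 3) (FImp (C3 3 4 2) (FImp (C3 0 5 1)
  (FImp (FNot (C3 0 4 1)) (FImp (FNot (FEq 4 1)) (FImp (FNot (FEq 0 1))
  (FAnd (C3 2 5 3) (FOr (C3 2 0 1) (FEq 0 2))))))))))
  6 [:: a; b; a'; b'; x; z].
Qed.

Lemma g_ident p q a b z :
  cyc3 p z q ==> (cyc3 a z b ==> (~~ cyc3 p a q ==> (~~ cyc3 p b q ==>
  (~~ cyc3 a p b ==> (~~ cyc3 a q b ==> ((a == p) && (b == q))))))).
Proof.
rgeo (FImp (C3 0 4 1) (FImp (C3 2 4 3) (FImp (FNot (C3 0 2 1)) (FImp (FNot (C3 0 3 1))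
  (FImp (FNot (C3 2 0 3)) (FImp (FNot (C3 2 1 3)) (FAnd (FEq 2 0) (FEq 3 1))))))))
  5 [:: p; q; a; b; z].
Qed.

Lemma g_inside a w b x :
  cyc3 a w b ==> ((x != a) ==> ((x != b) ==> (~~ cyc3 a x b ==> crn w x a b))).
Proof.
rgeo (FImp (C3 0 1 2) (FImp (FNot (FEq 3 0)) (FImp (FNot (FEq 3 2))
  (FImp (FNot (C3 0 3 2)) (CR 1 3 0 2))))) 4 [:: a; w; b; x].
Qed.

Lemma g_A3a i w a b : crn i w a b ==> (cyc3 i a w || cyc3 i b w).
Proof. rgeo (FImp (CR 0 1 2 3) (FOr (C3 0 2 1) (C3 0 3 1))) 4 [:: i; w; a; b]. Qed.

Lemma g_trans3 i a w k : cyc3 i a w ==> (cyc3 i w k ==> cyc3 i a k).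
Proof. rgeo (FImp (C3 0 1 2) (FImp (C3 0 2 3) (C3 0 1 3))) 4 [:: i; a; w; k]. Qed.

Lemma g_trans3b i m a k : cyc3 m a k ==> (cyc3 i m k ==> cyc3 i m a).
Proof. rgeo (FImp (C3 1 2 3) (FImp (C3 0 1 3) (C3 0 1 2))) 4 [:: i; m; a; k]. Qed.

Lemma g_A3b i m k a b :
  crn m k a b ==> (cyc3 i m k ==> (~~ crn i k a b ==> (~~ crn i m a b ==>
  (((b == i) && cyc3 m a k) || ((a == i) && cyc3 m b k))))).
Proof.
rgeo (FImp (CR 1 2 3 4) (FImp (C3 0 1 2) (FImp (FNot (CR 0 2 3 4)) (FImp (FNot (CR 0 1 3 4))
  (FOr (FAnd (FEq 4 0) (C3 1 3 2)) (FAnd (FEq 3 0) (C3 1 4 2)))))))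
  5 [:: i; m; k; a; b].
Qed.

Lemma g_A4 p q t v i k :
  cyc3 p t q ==> (~~ cyc3 p i q ==> (~~ cyc3 p k q ==> (crn i k t v ==> crn p q t v))).
Proof.
rgeo (FImp (C3 0 2 1) (FImp (FNot (C3 0 4 1)) (FImp (FNot (C3 0 5 1))
  (FImp (CR 4 5 2 3) (CR 0 1 2 3))))) 6 [:: p; q; t; v; i; k].
Qed.

Lemma g_A4b i k t v :
  crn i k t v ==> ((cyc3 t i v || cyc3 t k v) && (cyc3 v i t || cyc3 v k t)).
Proof.
rgeo (FImp (CR 0 1 2 3) (FAnd (FOr (C3 2 0 3) (C3 2 1 3)) (FOr (C3 3 0 2) (C3 3 1 2))))
  4 [:: i; k; t; v].
Qed.

Lemma g_match x y j l :
  [&& x != y, x != j, x != l, y != j, y != l & j != l] ==>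
  [|| crn x y j l, crn x j y l | crn x l y j].
Proof.
rgeo (FImp (FAnd (FNot (FEq 0 1)) (FAnd (FNot (FEq 0 2))
  (FAnd (FNot (FEq 0 3)) (FAnd (FNot (FEq 1 2)) (FAnd (FNot (FEq 1 3)) (FNot (FEq 2 3)))))))
  (FOr (CR 0 1 2 3) (FOr (CR 0 2 1 3) (CR 0 3 1 2)))) 4 [:: x; y; j; l].
Qed.

Lemma g_sgn1 x y j l :
  crn x y j l ==> ((((j < x) (+) (j < l)) (+) (y < l)) == (y < x)).
Proof.
rgeo (FImp (CR 0 1 2 3) (FIff (FXor (FXor (FLt 2 0) (FLt 2 3)) (FLt 1 3)) (FLt 1 0)))
  4 [:: x; y; j; l].
Qed.

Lemma g_sgn2 x y j l :
  crn x y j l ==> ((((l < x) (+) (l < j)) (+) (y < j)) == (y < x)).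
Proof.
rgeo (FImp (CR 0 1 2 3) (FIff (FXor (FXor (FLt 3 0) (FLt 3 2)) (FLt 1 2)) (FLt 1 0)))
  4 [:: x; y; j; l].
Qed.

Lemma g_sgn3 x j l :
  [&& x != j, x != l & j != l] ==>
  ((((j < x) (+) (j < l)) (+) (x < l)) == ~~ (((l < x) (+) (l < j)) (+) (x < j))).
Proof.
rgeo (FImp (FAnd (FNot (FEq 0 1)) (FAnd (FNot (FEq 0 2)) (FNot (FEq 1 2))))
  (FIff (FXor (FXor (FLt 1 0) (FLt 1 2)) (FLt 0 2))
        (FNot (FXor (FXor (FLt 2 0) (FLt 2 1)) (FLt 0 1))))) 3 [:: x; j; l].
Qed.

Lemma g_trans3c i m a k : cyc3 i m k ==> (cyc3 m a k ==> cyc3 i a k).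
Proof. rgeo (FImp (C3 0 1 3) (FImp (C3 1 2 3) (C3 0 2 3))) 4 [:: i; m; a; k]. Qed.

Definition L (n a b : nat) := if a < b then b - a else n + b - a.

Lemma L_lt_cyc3 n i a w : i < n -> a < n -> w < n ->
  cyc3 i a w -> L n i a < L n i w.
Proof. rewrite /L /cyc3; case: ifP; case: ifP; lia. Qed.

Lemma L_len1 n a b a' b' : a < n -> b < n -> a' < n -> b' < n ->
  cyc3 a' a b' -> (cyc3 a b b' || (b == b')) -> L n a b < L n a' b'.
Proof. rewrite /L /cyc3; case: ifP; case: ifP; lia. Qed.

Lemma L_len2 n a b a' b' : a < n -> b < n -> a' < n -> b' < n ->
  cyc3 a' b b' -> (cyc3 a' a b || (a == a')) -> L n a b < L n a' b'.
Proof. rewrite /L /cyc3; case: ifP; case: ifP; lia. Qed.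

Lemma L_inj n t x y : t < n -> x < n -> y < n -> x != t -> y != t ->
  L n t x = L n t y -> x = y.
Proof. rewrite /L; case: ifP; case: ifP; lia. Qed.

(* gap: q first after t, p last before t *)
Lemma L_gap1 n t p q : t < n -> p < n -> q < n -> p != t -> q != t ->
  L n t q < L n t p -> cyc3 p t q.
Proof. rewrite /L /cyc3; case: ifP; case: ifP; lia. Qed.

Lemma L_gap2 n t p q x : t < n -> p < n -> q < n -> x < n -> x != t ->
  p != t -> q != t -> L n t q <= L n t x -> L n t x <= L n t p -> ~~ cyc3 p x q.
Proof. rewrite /L /cyc3; case: ifP; case: ifP; case: ifP; lia. Qed.

Section Geom.
Variable n : nat.
Hypothesis hn : 2 < n.
Variable E : {set 'I_n * 'I_n}.
Hypothesis hD : dissection E.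

Lemma crossbE (i k j l : 'I_n) : crossb i k j l = crn i k j l.
Proof. by []. Qed.

Lemma eqoE (i j : 'I_n) : (i == j) = (nat_of_ord i == nat_of_ord j).
Proof. by []. Qed.

Lemma hDnc i k j l : (i, k) \in E -> (j, l) \in E -> ~~ crn i k j l.
Proof. by case: hD => _ _ H /H /[apply]. Qed.

Lemma hDsym i j : (i, j) \in E -> (j, i) \in E.
Proof. by case: hD => _ H _ /H. Qed.

Lemma hDneq i j : (i, j) \in E -> i != j.
Proof. by case: hD => H _ _ /H /andP []. Qed.

Lemma gap (Q : {set 'I_n}) (t : 'I_n) : t \notin Q -> 1 < #|Q| ->
  exists p q, [/\ p \in Q, q \in Q, p != q, cyc3 p t q &
     forall x, x \in Q -> ~~ cyc3 p x q].
Proof.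
move=> tQ Q2.
have [x0 x0Q] : exists x0, x0 \in Q.
  by case/card_gt0P: (ltnW Q2) => x ?; exists x.
have [q qQ qmin] := @arg_minnP _ x0 (fun x => x \in Q) (fun x => L n t x) x0Q.
have [p pQ pmax] := @arg_maxnP _ x0 (fun x => x \in Q) (fun x => L n t x) x0Q.
have neqt y : y \in Q -> (nat_of_ord y != nat_of_ord t).
  by move=> yQ; apply/eqP => /val_inj e; move: tQ; rewrite -e yQ.
have pq : p != q.
  apply/eqP => epq.
  have [y [yQ yq]] : exists y, y \in Q /\ y != q.
    have : 1 < #|Q| := Q2.
    rewrite (cardD1 q) qQ ltnS => /card_gt0P [y]; rewrite !inE => /andP [yq yQ].
    by exists y.
  move/eqP: yq; apply; apply: val_inj.
  apply: (@L_inj n t) => //; rewrite ?ltn_ord ?neqt //.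
  apply/eqP; rewrite eqn_leq (qmin _ yQ) andbT.
  by rewrite epq in pmax; exact: (pmax _ yQ).
exists p, q; split => //.
- apply: (@L_gap1 n t p q) => //; rewrite ?ltn_ord ?neqt //.
  rewrite ltn_neqAle (qmin _ pQ) andbT.
  apply/eqP => e; move/eqP: pq; apply; apply/val_inj/esym.
  by apply: (@L_inj n t) => //; rewrite ?ltn_ord ?neqt.
- move=> x xQ; apply: (@L_gap2 n t p q x); rewrite ?ltn_ord ?neqt //.
  + exact: qmin.
  + exact: pmax.
Qed.


Definition mp {a b : bool} (h : a ==> b) (x : a) : b := implyP h x.

Lemma neq_nat (i j : 'I_n) : i != j -> nat_of_ord i != nat_of_ord j.
Proof. by []. Qed.

Lemma neqP_nat (i j : 'I_n) : nat_of_ord i != nat_of_ord j -> i != j.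
Proof. by []. Qed.

Lemma crn_id i j l : ~~ crn i i j l.
Proof. by apply/negP => /(mp (g_dist i i j l)); rewrite eqxx. Qed.

Lemma crn_kj i k l : ~~ crn i k k l.
Proof. by apply/negP => h; move: (mp (g_dist i k k l) h); rewrite eqxx /= !andbF. Qed.

Lemma card3_pick (X : {set 'I_n}) (p q : 'I_n) : 2 < #|X| ->
  exists r, [/\ r \in X, r != p & r != q].
Proof.
move=> X3.
have : 0 < #|X :\ p :\ q|.
  have h1 := cardsD1 p X; have h2 := cardsD1 q (X :\ p).
  move: X3; rewrite h1 h2; case: (p \in X); case: (q \in X :\ p) => //=;
  rewrite ?add1n ?add0n ?ltnS //; move=> h; exact: ltn_trans h.
case/card_gt0P => r; rewrite !inE => /and3P [rq rp rX].
by exists r.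
Qed.

Lemma cell_card Q : cell E Q -> 2 < #|Q|.
Proof. by case. Qed.

Lemma not_edge (p q z r : 'I_n) : cyc3 p z q -> cyc3 q r p -> ~~ edgeP p q.
Proof.
move=> h1 h2; rewrite /edgeP /neighb; apply/negP => /and4P [_ _ _ /orP [] /forallP F].
- by move: (F z); rewrite inE h1.
- by move: (F r); rewrite inE h2.
Qed.

Lemma cell_gap Q t : cell E Q -> t \notin Q ->
  exists p q, [/\ p \in Q, q \in Q, (p, q) \in E, cyc3 p t q &
     forall x, x \in Q -> ~~ cyc3 p x q].
Proof.
move=> cQ tQ; have Q3 := cell_card cQ.
have [p [q [pQ qQ pq ptq Hx]]] := gap tQ (ltnW Q3).
exists p, q; split => //.
case: cQ => _ H2 _.
have : neighb Q p q by rewrite /neighb pQ qQ pq; apply/orP; left; apply/forall_inP.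
move/H2/orP => [|//].
have [r [rQ rp rq]] := card3_pick p q Q3.
have : cyc3 q r p.
  move: (g_tri p r q); rewrite (negbTE (Hx r rQ)) /= => h.
  by move: (mp (mp (mp h (neq_nat rp)) (neq_nat rq)) (neq_nat pq)).
by move=> h E'; move: (not_edge ptq h); rewrite E'.
Qed.

Lemma A4 Q i k t v : cell E Q -> i \in Q -> k \in Q -> (t, v) \in E -> ~~ crn i k t v.
Proof.
move=> cQ iQ kQ tvE; apply/negP => Hc.
have inQ (t' v' : 'I_n) : (t', v') \in E -> crn i k t' v' -> t' \in Q.
  move=> e h; apply/negPn/negP => t'Q.
  have [p [q [pQ qQ pqE ptq Hx]]] := cell_gap cQ t'Q.
  have := mp (mp (mp (mp (g_A4 p q t' v' i k) ptq) (Hx _ iQ)) (Hx _ kQ)) h.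
  by apply/negP; apply: hDnc.
have tQ := inQ _ _ tvE Hc.
have vQ : v \in Q by apply: (inQ v t (hDsym tvE)); rewrite -g_sym2.
case: cQ => _ _ H3.
have : neighb Q t v.
  by apply/negPn/negP => /(H3 t v tQ vQ (hDneq tvE)); rewrite tvE.
rewrite /neighb => /and4P [_ _ _ /orP [] /forall_inP F].
- move: (mp (g_A4b i k t v) Hc) => /andP [/orP [] h _].
  + by move: (F _ iQ); rewrite h.
  + by move: (F _ kQ); rewrite h.
- move: (mp (g_A4b i k t v) Hc) => /andP [_ /orP [] h].
  + by move: (F _ iQ); rewrite h.
  + by move: (F _ kQ); rewrite h.
Qed.

Lemma A5_aux Q1 Q2 i k w : cell E Q1 -> cell E Q2 -> w \in Q1 -> w \notin Q2 ->
  i \in Q1 -> k \in Q1 -> i \in Q2 -> k \in Q2 -> i != k ->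
  (i, k) \in E.
Proof.
move=> c1 c2 w1 w2 i1 k1 i2 k2 ik.
have [p [q [pQ qQ pqE pwq Hx]]] := cell_gap c2 w2.
have inpq y : y \in Q1 -> y \in Q2 -> (y == p) || (y == q).
  move=> y1 y2; apply/negPn/negP; rewrite negb_or => /andP [yp yq].
  have pq : p != q by rewrite eqoE; case/and3P: (mp (g_c3dist p w q) pwq).
  have h : cyc3 q y p.
    move: (g_tri p y q); rewrite (negbTE (Hx y y2)) /= => h.
    exact: (mp (mp (mp h (neq_nat yp)) (neq_nat yq)) (neq_nat pq)).
  have := mp (mp (g_cr_cyc p w q y) pwq) h.
  by apply/negP; apply: (A4 c1).
move: (inpq _ i1 i2) (inpq _ k1 k2) => /orP [] /eqP ei /orP [] /eqP ek.
- by move: ik; rewrite ei ek eqxx.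
- by rewrite ei ek.
- by rewrite ei ek; apply: hDsym.
- by move: ik; rewrite ei ek eqxx.
Qed.

Lemma A5 Q1 Q2 i k : cell E Q1 -> cell E Q2 -> Q1 != Q2 ->
  i \in Q1 -> k \in Q1 -> i \in Q2 -> k \in Q2 -> i != k ->
  (i, k) \in E.
Proof.
move=> c1 c2 Q12 i1 k1 i2 k2 ik.
case: (boolP (Q1 \subset Q2)) => [s12|/subsetPn [w w1 w2]]; last first.
  exact: (A5_aux c1 c2 w1 w2).
case: (boolP (Q2 \subset Q1)) => [s21|/subsetPn [w w2 w1]]; last first.
  exact: (A5_aux c2 c1 w2 w1).
by move: Q12; rewrite eqEsubset s12 s21.
Qed.


Definition vis (X : {set 'I_n}) : {set 'I_n} :=
  [set z : 'I_n | [forall x in X, forall e in E, ~~ crn z x e.1 e.2]].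

Section Vis.
Variable X : {set 'I_n}.
Hypothesis X3 : 2 < #|X|.
Hypothesis HX : forall x y e, x \in X -> y \in X -> e \in E -> ~~ crn x y e.1 e.2.

Lemma visP (z : 'I_n) : reflect (forall x e, x \in X -> e \in E -> ~~ crn z x e.1 e.2) (z \in vis X).
Proof.
rewrite inE; apply: (iffP forall_inP) => [H x e xX eE|H x xX].
- by move/forall_inP: (H x xX) => /(_ e eE).
- by apply/forall_inP => e eE; apply: H.
Qed.

Lemma sub_vis : X \subset vis X.
Proof. by apply/subsetP => x xX; apply/visP => y e yX eE; apply: HX. Qed.

Lemma orient_cr (z x : 'I_n) (e : 'I_n * 'I_n) : e \in E -> crn z x e.1 e.2 ->
  exists a b, [/\ (a, b) \in E, cyc3 a z b & cyc3 b x a].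
Proof.
case: e => a b /= eE /(mp (g_orient z x a b)) /orP [] /andP [h1 h2].
- by exists a, b.
- by exists b, a; split => //; apply: hDsym.
Qed.

Lemma vis_gap_E (p q z : 'I_n) : p \in vis X -> q \in vis X ->
  (forall x, x \in vis X -> ~~ cyc3 p x q) -> cyc3 p z q -> (p, q) \in E.
Proof.
move=> pQ qQ HQ pzq.
have zQ : z \notin vis X by apply/negP => /HQ; rewrite pzq.
have [x [e [xX eE hc]]] : exists x e, [/\ x \in X, e \in E & crn z x e.1 e.2].
  move: zQ; rewrite inE negb_forall => /existsP [x]; rewrite negb_imply => /andP [xX].
  rewrite negb_forall => /existsP [e]; rewrite negb_imply negbK => /andP [eE h].
  by exists x, e.
have [a0 [b0 [e0E a0zb0 b0xa0]]] := orient_cr eE hc.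
pose F := [set e in E | cyc3 e.1 z e.2 && [forall y in X, ~~ cyc3 e.1 y e.2]].
have FP e' : reflect [/\ e' \in E, cyc3 e'.1 z e'.2 & forall y, y \in X -> ~~ cyc3 e'.1 y e'.2]
  (e' \in F).
  rewrite inE; apply: (iffP and3P) => [[h1 h2 /forall_inP h3]|[h1 h2 h3]]; split => //.
  by apply/forall_inP.
have inF (a b x' : 'I_n) : (a, b) \in E -> cyc3 a z b -> cyc3 b x' a -> x' \in X -> (a, b) \in F.
  move=> abE azb bxa x'X; apply/FP; split => // y yX; apply/negP => ayb.
  have := mp (mp (g_cr_cyc a y b x') ayb) bxa.
  by apply/negP; apply: (HX yX x'X abE).
have e0F := inF _ _ _ e0E a0zb0 b0xa0 xX.
have [[a b] abF abmax] := @arg_maxnP _ (a0, b0) (fun e => e \in F) (fun e => L n e.1 e.2) e0F.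
case/FP: abF => /= abE azb Hab.
have ab : a != b := hDneq abE.
have [x1 [x1X x1a x1b]] := card3_pick a b X3.
have inside (w : 'I_n) : cyc3 a w b -> w \notin vis X.
  move=> awb; apply/negP => /visP /(_ x1 (a, b) x1X abE) /negP; apply.
  exact: (mp (mp (mp (mp (g_inside a w b x1) awb) (neq_nat x1a)) (neq_nat x1b)) (Hab _ x1X)).
have aQ : a \in vis X.
  apply/visP => x' e' x'X e'E; apply/negP => hc'.
  have [a' [b' [e'E' a'ab' b'x'a']]] := orient_cr e'E hc'.
  have x'a : nat_of_ord x' != nat_of_ord a.
    apply/eqP => /val_inj ex'; move: hc'; rewrite ex'; apply/negP; exact: crn_id.
  have := mp (mp (mp (mp (mp (mp (mp (g_maxarc1 a b a' b' x' z) (hDnc abE e'E'))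
           a'ab') b'x'a') azb) (Hab _ x'X)) x'a) (neq_nat ab).
  case/andP => a'zb' hb.
  have := abmax _ (inF _ _ _ e'E' a'zb' b'x'a' x'X); rewrite /= leqNgt.
  by rewrite (@L_len1 n a b a' b') ?ltn_ord.
have bQ : b \in vis X.
  apply/visP => x' e' x'X e'E; apply/negP => hc'.
  have [a' [b' [e'E' a'bb' b'x'a']]] := orient_cr e'E hc'.
  have x'b : nat_of_ord x' != nat_of_ord b.
    apply/eqP => /val_inj ex'; move: hc'; rewrite ex'; apply/negP; exact: crn_id.
  have := mp (mp (mp (mp (mp (mp (mp (g_maxarc2 a b a' b' x' z) (hDnc abE e'E'))
           a'bb') b'x'a') azb) (Hab _ x'X)) x'b) (neq_nat ab).
  case/andP => a'zb' hb.
  have := abmax _ (inF _ _ _ e'E' a'zb' b'x'a' x'X); rewrite /= leqNgt.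
  by rewrite (@L_len2 n a b a' b') ?ltn_ord.
have nin (w : 'I_n) : w \in vis X -> ~~ cyc3 a w b by move=> wQ; apply/negP => /inside; rewrite wQ.
have := mp (mp (mp (mp (mp (mp (g_ident p q a b z) pzq) azb) (HQ _ aQ)) (HQ _ bQ))
  (nin _ pQ)) (nin _ qQ).
case/andP => /eqP /val_inj <- /eqP /val_inj <-.
exact: abE.
Qed.

Lemma vis_cell : cell E (vis X).
Proof.
split.
- exact: leq_trans X3 (subset_leq_card sub_vis).
- move=> p q; rewrite /neighb => /and4P [pQ qQ pq /orP [] /forall_inP F].
  + case: (boolP (edgeP p q)) => //= ne.
    have [z pzq] : exists z : 'I_n, cyc3 p z q.
      move: ne; rewrite /edgeP /neighb !inE pq /= negb_or => /andP [].
      by rewrite negb_forall => /existsP [z]; rewrite inE /= negbK => h _; exists z.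
    exact: (vis_gap_E pQ qQ F pzq).
  + case: (boolP (edgeP p q)) => //= ne.
    have [z qzp] : exists z : 'I_n, cyc3 q z p.
      move: ne; rewrite /edgeP /neighb !inE pq /= negb_or => /andP [_].
      by rewrite negb_forall => /existsP [z]; rewrite inE /= negbK => h; exists z.
    exact: hDsym (vis_gap_E qQ pQ F qzp).
- move=> p q pQ qQ pq; rewrite /neighb pQ qQ pq /= negb_or => /andP [].
  rewrite negb_forall => /existsP [r1]; rewrite negb_imply negbK => /andP [r1Q h1].
  rewrite negb_forall => /existsP [r2]; rewrite negb_imply negbK => /andP [r2Q h2].
  apply/negP => pqE.
  have [x [xX xp xq]] := card3_pick p q X3.
  move: (mp (mp (mp (g_tri p x q) (neq_nat xp)) (neq_nat xq)) (neq_nat pq)) => /orP [] h.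
  + have := mp (mp (g_cr_cyc q r2 p x) h2) h; rewrite -g_sym2.
    by apply/negP; move/visP: r2Q => /(_ x (p, q) xX pqE).
  + have := mp (mp (g_cr_cyc p r1 q x) h1) h.
    by apply/negP; move/visP: r1Q => /(_ x (p, q) xX pqE).
Qed.

End Vis.


Definition uncr (i k : 'I_n) := forall e, e \in E -> ~~ crn i k e.1 e.2.

Lemma third (i k : 'I_n) : uncr i k -> (exists w : 'I_n, cyc3 i w k) ->
  exists z : 'I_n, [/\ cyc3 i z k, uncr i z & uncr z k].
Proof.
move=> ik [w0 iw0k].
have [w iwk wmin] := @arg_minnP _ w0 (fun w : 'I_n => cyc3 i w k) (fun w => L n i w) iw0k.
pose F := [set m : 'I_n | cyc3 i m k && [forall e in E, ~~ crn i m e.1 e.2]].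
have FP (m : 'I_n) : reflect (cyc3 i m k /\ uncr i m) (m \in F).
  rewrite inE; apply: (iffP andP) => [[h /forall_inP h']|[h h']]; split => //.
  by apply/forall_inP.
have wF : w \in F.
  apply/FP; split => // -[a b] /= abE; apply/negP => hc.
  have aux (a' : 'I_n) : cyc3 i a' w -> False.
    move=> iaw; have iak := mp (mp (g_trans3 i a' w k) iaw) iwk.
    have := wmin _ iak; rewrite leqNgt.
    by rewrite (@L_lt_cyc3 n i a' w) ?ltn_ord.
  by case/orP: (mp (g_A3a i w a b) hc) => /aux.
have [m mF mmax] := @arg_maxnP _ w (fun m => m \in F) (fun m => L n i m) wF.
case/FP: mF => imk im.
exists m; split => // -[a b] /= abE; apply/negP => hc.
have aux (a' : 'I_n) : (i, a') \in E -> cyc3 m a' k -> False.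
  move=> ia'E ma'k.
  have a'F : a' \in F.
    apply/FP; split; first exact: (mp (mp (g_trans3c i m a' k) imk) ma'k).
    by move=> [e1 e2] e'E; exact: hDnc ia'E e'E.
  have := mmax _ a'F; rewrite /= leqNgt.
  by rewrite (@L_lt_cyc3 n i m a') ?ltn_ord // (mp (mp (g_trans3b i m a' k) ma'k) imk).
move: (mp (mp (mp (mp (g_A3b i m k a b) hc) imk) (ik (a, b) abE)) (im (a, b) abE)).
case/orP => /andP [/eqP ebi h].
- by apply: (aux a) => //; apply: hDsym; rewrite (val_inj ebi) in abE.
- by apply: (aux b) => //; rewrite (val_inj ebi) in abE.
Qed.

Lemma uncr_sym i k : uncr i k -> uncr k i.
Proof. by move=> h e eE; rewrite -g_sym1; apply: h. Qed.

Lemma cell_of_pair (i k : 'I_n) : i != k -> uncr i k ->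
  exists Q, [/\ cell E Q, i \in Q & k \in Q].
Proof.
move=> ik hik.
have [z [iz kz hiz hzk]] : exists z : 'I_n, [/\ z != i, z != k, uncr i z & uncr z k].
  have T3 : 2 < #|[set: 'I_n]| by rewrite cardsT card_ord.
  have [w [_ wi wk]] := card3_pick i k T3.
  move: (mp (mp (mp (g_tri i w k) (neq_nat wi)) (neq_nat wk)) (neq_nat ik)) => /orP [] h.
  - have [z [izk h1 h2]] := third hik (ex_intro _ w h).
    case/and3P: (mp (g_c3dist i z k) izk) => h3 h4 _.
    by exists z; split => //; rewrite eq_sym; exact: h3.
  - have [z [kzi h1 h2]] := third (uncr_sym hik) (ex_intro _ w h).
    case/and3P: (mp (g_c3dist k z i) kzi) => h3 h4 _.
    exists z; split; [exact: h4 | rewrite eq_sym; exact: h3 | exact: uncr_sym h2 | exact: uncr_sym h1].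
pose X := i |: (k |: [set z]).
have X3 : 2 < #|X|.
  rewrite /X !cardsU1 cards1 !inE (negbTE ik) (eq_sym k z) (negbTE kz) /=.
  by rewrite eq_sym (negbTE iz).
have HX x y e : x \in X -> y \in X -> e \in E -> ~~ crn x y e.1 e.2.
  rewrite !inE => /or3P [] /eqP -> /or3P [] /eqP -> eE; rewrite ?crn_id //.
  - exact: hik.
  - exact: hiz.
  - by rewrite -g_sym1; apply: hik.
  - by rewrite -g_sym1; apply: hzk.
  - by rewrite -g_sym1; apply: hiz.
  - exact: hzk.
exists (vis X); split; first exact: vis_cell.
- by apply: (subsetP (sub_vis HX)); rewrite !inE eqxx.
- by apply: (subsetP (sub_vis HX)); rewrite !inE eqxx orbT.
Qed.

End Geom.

Local Open Scope ring_scope.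

Section Alg.
Variable R : unitRingType.
Variable T : Type.

Definition cP (d : T -> T -> R) j l x y :=
  d x y = d x j * (d l j)^-1 * d l y + d x l * (d j l)^-1 * d j y.

Definition rhs (d : T -> T -> R) j l x y :=
  d x j * (d l j)^-1 * d l y + d x l * (d j l)^-1 * d j y.

Lemma unitM2 (x y : R) : x \is a GRing.unit -> y \is a GRing.unit -> x * y \is a GRing.unit.
Proof. by move=> ux uy; rewrite unitrMl. Qed.

Lemma cP_sym d j l x y : cP d j l x y -> cP d l j x y.
Proof. by rewrite /cP addrC. Qed.

Lemma cP_xj d j l y : d j j = 0 -> d j l \is a GRing.unit -> cP d j l j y.
Proof. by move=> z u; rewrite /cP z !mul0r add0r mulrV ?mul1r. Qed.

Lemma cP_xl d j l y : d l l = 0 -> d l j \is a GRing.unit -> cP d j l l y.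
Proof. by move=> z u; rewrite /cP z !mul0r addr0 mulrV ?mul1r. Qed.

Lemma cP_yj d j l x : d j j = 0 -> d l j \is a GRing.unit -> cP d j l x j.
Proof. by move=> z u; rewrite /cP z !mulr0 addr0 mulrVK. Qed.

Lemma cP_yl d j l x : d l l = 0 -> d j l \is a GRing.unit -> cP d j l x l.
Proof. by move=> z u; rewrite /cP z !mulr0 add0r mulrVK. Qed.

Lemma expand_left d t v j l x y : cP d t v x j -> cP d t v x l ->
  rhs d j l x y = d x t * (d v t)^-1 * rhs d j l v y + d x v * (d t v)^-1 * rhs d j l t y.
Proof.
rewrite /cP /rhs => -> ->.
rewrite !mulrDl !mulrDr !mulrA.
set A := _ * _ * d v j * _ * _; set B := _ * _ * d t j * _ * _.
set C := _ * _ * d v l * _ * _; set D := _ * _ * d t l * _ * _.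
by rewrite addrACA.
Qed.

Lemma expand_right d t v j l x y : cP d t v j y -> cP d t v l y ->
  rhs d j l x y = rhs d j l x t * (d v t)^-1 * d v y + rhs d j l x v * (d t v)^-1 * d t y.
Proof.
rewrite /cP /rhs => -> ->.
rewrite !mulrDl !mulrDr !mulrA.
set A := d x j * _ * d l t * _ * _; set B := d x j * _ * d l v * _ * _.
set C := d x l * _ * d j t * _ * _; set D := d x l * _ * d j v * _ * _.
by rewrite addrACA.
Qed.

Lemma pivot_change d t v j l x y :
  d t t = 0 -> d v v = 0 -> d t v \is a GRing.unit -> d v t \is a GRing.unit ->
  cP d t v x y -> cP d t v x j -> cP d t v x l -> cP d t v j y -> cP d t v l y ->
  cP d j l t t -> cP d j l t v -> cP d j l v t -> cP d j l v v ->
  cP d j l x y.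
Proof.
move=> ztt zvv utv uvt Hxy Hxj Hxl Hjy Hly Htt Htv Hvt Hvv.
rewrite /cP -/(rhs d j l x y) (expand_left y Hxj Hxl).
rewrite (expand_right v Hjy Hly) (expand_right t Hjy Hly).
rewrite /rhs -Hvt -Hvv -Htt -Htv zvv ztt !mul0r addr0 add0r.
by rewrite !divrr // !mul1r.
Qed.


Lemma eq_of_add0 (a b : R) : 0 = a + b -> a = - b.
Proof. by move=> h; apply/eqP; rewrite -addr_eq0 -h. Qed.

Lemma inv_form (x w y u : R) : x \is a GRing.unit -> w \is a GRing.unit ->
  y \is a GRing.unit -> y = x * w^-1 * u -> u * y^-1 = w * x^-1.
Proof.
move=> ux uw uy hy.
have hu : u = w * x^-1 * y.
  by rewrite hy !mulrA (mulrVK ux) (mulrV uw) mul1r.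
by rewrite hu mulrK.
Qed.

Lemma q4_i d j l t v : d v v = 0 ->
  d j t \is a GRing.unit -> d t v \is a GRing.unit -> d v t \is a GRing.unit ->
  d t j \is a GRing.unit ->
  cP d t v l j -> cP d j t v v ->
  d l j = (d l v - d l t * (d j t)^-1 * d j v) * (d t v)^-1 * d t j.
Proof.
move=> zvv ujt utv uvt utj K2 K6.
rewrite /cP zvv in K6; move/eq_of_add0: K6 => K6.
have Hvj : d v j = - (d v t * (d j t)^-1 * d j v) * (d t v)^-1 * d t j.
  by rewrite -K6 mulrK // mulrVK.
rewrite K2 Hvj mulrBl mulrBl addrC; congr (_ + _).
rewrite !mulNr !mulrN !mulrA mulrVK //.
Qed.

Lemma q4_main d j l t v : d t t = 0 -> d v v = 0 ->
  d t v \is a GRing.unit -> d v t \is a GRing.unit ->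
  d j t \is a GRing.unit -> d l t \is a GRing.unit ->
  d t j \is a GRing.unit -> d t l \is a GRing.unit ->
  d l j \is a GRing.unit -> d j l \is a GRing.unit ->
  cP d t v j l -> cP d t v l j -> cP d j t v v -> cP d l t v v ->
  cP d j l t t /\ cP d j l t v.
Proof.
move=> ztt zvv utv uvt ujt ult utj utl ulj ujl K1 K2 K6 K8.
set al := d l v - d l t * (d j t)^-1 * d j v.
set be := d j v - d j t * (d l t)^-1 * d l v.
have Hi : d l j = al * (d t v)^-1 * d t j by apply: q4_i.
have Hii : d j l = be * (d t v)^-1 * d t l by apply: q4_i.
have Hiii : be = - (d j t * (d l t)^-1 * al).
  rewrite /be /al mulrBr opprB !mulrA mulrVK // mulrV // mul1r.
  by rewrite addrC.
have ual : al \is a GRing.unit.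
  have -> : al = d l j * (d t j)^-1 * d t v by rewrite Hi mulrK // mulrVK.
  by rewrite !unitM2 // unitrV.
have ube : be \is a GRing.unit.
  by rewrite Hiii unitrN !unitM2 // unitrV.
have Hiv : d t j * (d l j)^-1 = d t v * al^-1 by apply: inv_form.
have Hv : d t l * (d j l)^-1 = d t v * be^-1 by apply: inv_form.
have Hvi : be^-1 = - (al^-1 * d l t * (d j t)^-1).
  rewrite Hiii invrN invrM ?unitM2 ?unitrV // invrM ?unitrV // invrK.
  by rewrite !mulrA.
split.
- rewrite /cP ztt Hiv Hv Hvi ?mulrN ?mulNr !mulrA mulrVK //.
  by rewrite addrN.
- rewrite /cP Hiv Hv Hvi ?mulrN ?mulNr !mulrA.
  have -> : d t v / al * d l v - d t v / al * d l t / d j t * d j v = d t v / al * al.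
    by rewrite /al mulrBr !mulrA.
  by rewrite mulrVK.
Qed.


Lemma algA d j l x y : d y y = 0 ->
  d l j \is a GRing.unit -> d l y \is a GRing.unit -> d y l \is a GRing.unit ->
  cP d y l x j -> cP d j l y y -> cP d j l x y.
Proof.
move=> zyy ulj uly uyl Hxj Hyy.
rewrite /cP zyy in Hyy; move/eq_of_add0: Hyy => Hyy.
have E1 : d x y * (d l y)^-1 * d l j * (d l j)^-1 * d l y = d x y.
  by rewrite mulrK // mulrVK.
have E2 : d x l * (d y l)^-1 * d y j * (d l j)^-1 * d l y =
          - (d x l * (d j l)^-1 * d j y).
  have -> : d x l * (d y l)^-1 * d y j * (d l j)^-1 * d l y =
            d x l * (d y l)^-1 * (d y j * (d l j)^-1 * d l y) by rewrite !mulrA.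
  by rewrite Hyy mulrN !mulrA mulrVK.
rewrite /cP Hxj mulrDl mulrDl E1 E2.
by rewrite addrNK.
Qed.

Lemma expand_exist d t v t' v' i k :
  cP d t v i t' -> cP d t v i v' -> cP d t' v' t k -> cP d t' v' v k ->
  rhs d t v i k = rhs d t' v' i k.
Proof.
move=> H1 H2 H3 H4; rewrite (expand_right i H3 H4).
have -> : rhs d t v i t' = d i t' by exact: (esym H1).
have -> : rhs d t v i v' = d i v' by exact: (esym H2).
by [].
Qed.

Lemma sgn3 (a b e : bool) (X Y Z : R) :
  (-1) ^+ a * X * ((-1) ^+ b * Y)^-1 * ((-1) ^+ e * Z) =
  (-1) ^+ (a (+) b (+) e) * (X * Y^-1 * Z).
Proof.
rewrite invr_signM.
case: a; case: b; case: e; rewrite /= ?expr0 ?expr1 ?mul1r ?mulN1r ?mulNr ?mulrN ?opprK ?mulNr ?mulrN ?opprK ?mulNr ?mulrN ?opprK //.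
Qed.

Lemma cP_sign (s : T -> T -> bool) (c d : T -> T -> R) j l x y :
  d x y = (-1) ^+ s x y * c x y -> d x j = (-1) ^+ s x j * c x j ->
  d l j = (-1) ^+ s l j * c l j -> d l y = (-1) ^+ s l y * c l y ->
  d x l = (-1) ^+ s x l * c x l -> d j l = (-1) ^+ s j l * c j l ->
  d j y = (-1) ^+ s j y * c j y ->
  s x j (+) s l j (+) s l y = s x y -> s x l (+) s j l (+) s j y = s x y ->
  cP d j l x y <-> cP c j l x y.
Proof.
move=> e1 e2 e3 e4 e5 e6 e7 h1 h2.
rewrite /cP e1 e2 e3 e4 e5 e6 e7 !sgn3 h1 h2 -mulrDr.
split => [H|->//].
by rewrite -[c x y](signrMK (s x y)) H signrMK.
Qed.

Lemma cP_sign_tri (s : T -> T -> bool) (c d : T -> T -> R) j l x :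
  d x x = 0 -> d x j = (-1) ^+ s x j * c x j ->
  d l j = (-1) ^+ s l j * c l j -> d l x = (-1) ^+ s l x * c l x ->
  d x l = (-1) ^+ s x l * c x l -> d j l = (-1) ^+ s j l * c j l ->
  d j x = (-1) ^+ s j x * c j x ->
  s x j (+) s l j (+) s l x = ~~ (s x l (+) s j l (+) s j x) ->
  cP d j l x x <->
  c x j * (c l j)^-1 * c l x = c x l * (c j l)^-1 * c j x.
Proof.
move=> e1 e2 e3 e4 e5 e6 e7 h1.
rewrite /cP e1 e2 e3 e4 e5 e6 e7 !sgn3 h1 signrN mulNr.
split => [H|->].
- move: H; rewrite addrC => /esym/eqP; rewrite subr_eq0 => /eqP.
  move/(congr1 ( *%R ((-1) ^+ (s x l (+) s j l (+) s j x)))).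
  by rewrite /= !signrMK => ->.
- by rewrite addNr.
Qed.

End Alg.

Local Open Scope ring_scope.

Section Glue.
Variable R : unitRingType.
Variables n kappa : nat.
Hypothesis hn : (2 < n)%N.
Variable E : {set 'I_n * 'I_n}.
Hypothesis hD : dissection E.
Variable Pa : 'I_kappa.+1 -> {set 'I_n}.
Variable ca : 'I_kappa.+1 -> 'I_n -> 'I_n -> R.
Hypothesis hPa : injective Pa.
Hypothesis hcell : forall Q : {set 'I_n}, cell E Q <-> exists a, Q = Pa a.
Hypothesis hfr : forall a, frieze (Pa a) (ca a).
Hypothesis hcomp : forall a b t v, (t, v) \in E -> t \in Pa a -> v \in Pa a ->
     t \in Pa b -> v \in Pa b -> ca a t v = ca b t v.

Definition N (i k : 'I_n) := #|[set e in E | crn i k e.1 e.2]|.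

Lemma N_sym (i k : 'I_n) : N i k = N k i.
Proof. by apply: eq_card => e; rewrite !inE g_sym1. Qed.

Lemma N0 (i k : 'I_n) : N i k = 0%N -> uncr E i k.
Proof.
move=> h e eE; apply/negP => hc.
have : (0 < N i k)%N by apply/card_gt0P; exists e; rewrite inE eE hc.
by rewrite h.
Qed.

Lemma N_lt (i k a b : 'I_n) : (a, b) \in E -> crn i k a b -> (N i a < N i k)%N.
Proof.
move=> abE hc; apply: proper_card; apply/properP; split.
- apply/subsetP => -[e1 e2]; rewrite !inE /= => /andP [eE h]; rewrite eE /=.
  exact: (mp (mp (mp (g_L3 i k a b e1 e2) hc) (hDnc hD abE eE)) h).
- by exists (a, b); rewrite !inE /= abE /= ?hc /= ?(negbTE (crn_kj _ _ _)).
Qed.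

Lemma N_cross (i k t v : 'I_n) : (t, v) \in E -> crn i k t v ->
  [/\ (N i t < N i k)%N, (N i v < N i k)%N, (N t k < N i k)%N & (N v k < N i k)%N].
Proof.
move=> tvE h; have vtE := hDsym hD tvE.
have h2 : crn i k v t by rewrite -g_sym2.
have h3 : crn k i t v by rewrite -g_sym1.
have h4 : crn k i v t by rewrite -g_sym1 -g_sym2.
split; first exact: N_lt h.
- exact: N_lt h2.
- by rewrite N_sym (N_sym i k); apply: N_lt h3.
- by rewrite N_sym (N_sym i k); apply: N_lt h4.
Qed.

Lemma NE (t v : 'I_n) : (t, v) \in E -> N t v = 0%N.
Proof.
move=> tvE; apply/eqP; rewrite /N cards_eq0; apply/eqP/setP => -[e1 e2].
by rewrite !inE /=; case: (boolP ((e1, e2) \in E)) => //= eE; apply/negbTE; exact: (hDnc hD tvE eE).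
Qed.

Lemma cellPa a : cell E (Pa a).
Proof. by apply/hcell; exists a. Qed.

Lemma Pa_agree a b (i j : 'I_n) : i \in Pa a -> j \in Pa a -> i \in Pa b -> j \in Pa b ->
  i != j -> ca a i j = ca b i j.
Proof.
move=> ia ja ib jb ij; case: (eqVneq a b) => [-> //|ab].
apply: hcomp => //; apply: (A5 hD (cellPa a) (cellPa b)) => //.
by apply/negP => /eqP /hPa /eqP; rewrite (negbTE ab).
Qed.

Lemma in_cell (i k : 'I_n) : i != k -> N i k = 0%N -> exists a, i \in Pa a /\ k \in Pa a.
Proof.
move=> ik /N0 h; have [Q [cQ iQ kQ]] := cell_of_pair hn hD ik h.
by case/hcell: cQ => a eQ; exists a; rewrite -eQ.
Qed.

Lemma Pa_N0 a (i k : 'I_n) : i \in Pa a -> k \in Pa a -> N i k = 0%N.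
Proof.
move=> ia ka; apply/eqP; rewrite /N cards_eq0; apply/eqP/setP => -[e1 e2].
rewrite !inE /=; case: (boolP ((e1, e2) \in E)) => //= eE.
exact/negbTE/(A4 hD (cellPa a)).
Qed.

Lemma rhs_sym (c : 'I_n -> 'I_n -> R) t v i k : rhs c t v i k = rhs c v t i k.
Proof. by rewrite /rhs addrC. Qed.

Section TwoCross.
Variable c : 'I_n -> 'I_n -> R.
Variables i k : 'I_n.
Hypothesis c0 : forall x, c x x = 0.
Hypothesis cu : forall t v, (t, v) \in E -> c t v \is a GRing.unit.
Hypothesis IH : forall p q a b : 'I_n, (a, b) \in E -> crn p q a b -> (N p q < N i k)%N -> cP c a b p q.

Lemma two_cross_core (t v t' v' : 'I_n) : (t, v) \in E -> (t', v') \in E ->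
  cyc4 i t k v -> cyc4 i t' k v' ->
  ((nat_of_ord t' == t) || cyc3 t t' k) -> ((nat_of_ord v' == v) || cyc3 k v' v) ->
  rhs c t v i k = rhs c t' v' i k.
Proof.
move=> tvE t'v'E h1 h2 ht hv.
have cr1 : crn i k t v by rewrite /crn h1.
have cr2 : crn i k t' v' by rewrite /crn h2.
have [N1 N2 N3 N4] := N_cross tvE cr1.
have [N1' N2' N3' N4'] := N_cross t'v'E cr2.
have vtE := hDsym hD tvE; have v't'E := hDsym hD t'v'E.
apply: expand_exist.
- case/orP: ht => [/eqP/val_inj ->|h]; first by apply: cP_yj => //; apply: cu.
  by apply: IH (mp (mp (g_c1a i k t v t') h1) h) _.
- case/orP: hv => [/eqP/val_inj ->|h]; first by apply: cP_yl => //; apply: cu.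
  by apply: IH (mp (mp (g_c1b i k t v v') h1) h) _.
- case/orP: ht => [/eqP/val_inj <-|h]; first by apply: cP_xj => //; apply: cu.
  by apply: IH (mp (mp (mp (g_c1c i k t v t' v') h1) h2) h) _.
- case/orP: hv => [/eqP/val_inj <-|h]; first by apply: cP_xl => //; apply: cu.
  by apply: IH (mp (mp (mp (g_c1d i k t v t' v') h1) h2) h) _.
Qed.

Lemma two_cross_or (t v t' v' : 'I_n) : (t, v) \in E -> (t', v') \in E ->
  cyc4 i t k v -> cyc4 i t' k v' ->
  rhs c t v i k = rhs c t' v' i k.
Proof.
move=> tvE t'v'E h1 h2.
move: (mp (mp (mp (g_conf i k t v t' v') h1) h2) (hDnc hD tvE t'v'E)).
case/orP => /andP [ht hv].
- exact: two_cross_core.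
- by apply/esym; apply: two_cross_core.
Qed.

Lemma two_cross (t v t' v' : 'I_n) : (t, v) \in E -> (t', v') \in E ->
  crn i k t v -> crn i k t' v' ->
  rhs c t v i k = rhs c t' v' i k.
Proof.
move=> tvE t'v'E /orP [] h1 /orP [] h2.
- exact: two_cross_or.
- by rewrite (rhs_sym _ t' v'); apply: two_cross_or => //; apply: hDsym.
- by rewrite (rhs_sym _ t v); apply: two_cross_or => //; apply: hDsym.
- rewrite (rhs_sym _ t' v') (rhs_sym _ t v).
  by apply: two_cross_or => //; apply: hDsym.
Qed.

End TwoCross.

Lemma N_pos (i k t v : 'I_n) : (t, v) \in E -> crn i k t v -> (0 < N i k)%N.
Proof. by move=> tvE h; apply/card_gt0P; exists (t, v); rewrite inE tvE. Qed.

Lemma N_le (i k : 'I_n) : (N i k <= #|E|)%N.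
Proof. by apply/subset_leq_card/subsetP => e; rewrite inE => /andP []. Qed.

Lemma N_id (x : 'I_n) : N x x = 0%N.
Proof.
apply/eqP; rewrite /N cards_eq0; apply/eqP/setP => e.
by rewrite !inE (negbTE (crn_id _ _ _)) andbF.
Qed.

Definition Good (m : nat) (c : 'I_n -> 'I_n -> R) : Prop :=
  [/\ forall x, c x x = 0,
      forall a (i j : 'I_n), i \in Pa a -> j \in Pa a -> i != j -> c i j = ca a i j,
      forall t v, (t, v) \in E -> c t v \is a GRing.unit &
      forall i k t v : 'I_n, (t, v) \in E -> crn i k t v -> (N i k <= m)%N -> cP c t v i k].

Definition cz (i k : 'I_n) : R :=
  if i == k then 0 else
  if [pick a | (i \in Pa a) && (k \in Pa a)] is Some a then ca a i k else 0.

Lemma cz_cell a (i j : 'I_n) : i \in Pa a -> j \in Pa a -> i != j -> cz i j = ca a i j.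
Proof.
move=> ia ja ij; rewrite /cz (negbTE ij).
case: pickP => [b /andP [ib jb]|/(_ a)]; last by rewrite ia ja.
exact: Pa_agree.
Qed.

Lemma Good0 : Good 0 cz.
Proof.
split.
- by move=> x; rewrite /cz eqxx.
- exact: cz_cell.
- move=> t v tvE; have tv := hDneq hD tvE.
  have [a [ta va]] := in_cell tv (NE tvE).
  rewrite (cz_cell ta va tv).
  by case: (hfr a) => H _ _; apply: H.
- move=> i k t v tvE h; rewrite leqn0 => /eqP h0.
  by move: (N_pos tvE h); rewrite h0.
Qed.

Definition cs (c : 'I_n -> 'I_n -> R) (m : nat) (i k : 'I_n) : R :=
  if N i k == m.+1 then
    (if [pick e in E | crn i k e.1 e.2] is Some e then rhs c e.1 e.2 i k else c i k)
  else c i k.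

Lemma Good_step m c : Good m c -> Good m.+1 (cs c m).
Proof.
case=> c0 ccell cu crel.
have agree p q : (N p q <= m)%N -> cs c m p q = c p q.
  by move=> h; rewrite /cs; case: eqP => // e; move: h; rewrite e ltnn.
have agree0 p q : N p q = 0%N -> cs c m p q = c p q by move=> h; apply: agree; rewrite h.
split.
- by move=> x; rewrite agree0 ?N_id.
- by move=> a i j ia ja ij; rewrite agree0 ?(Pa_N0 ia ja) //; apply: ccell.
- by move=> t v tvE; rewrite agree0 ?NE //; apply: cu.
- move=> i k t v tvE h hN.
  have vtE := hDsym hD tvE.
  have [N1 N2 N3 N4] := N_cross tvE h.
  have ag p q : (N p q < N i k)%N -> cs c m p q = c p q.
    by move=> hp; apply: agree; rewrite -ltnS; apply: leq_trans hN.
  rewrite /cP (ag _ _ N1) (ag _ _ N2) (ag _ _ N3) (ag _ _ N4).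
  rewrite (agree0 _ _ (NE tvE)) (agree0 _ _ (NE vtE)).
  case: (ltnP (N i k) m.+1) => [hlt|hge].
  + have hle : (N i k <= m)%N by rewrite -ltnS.
    by rewrite agree //; apply: crel.
  + have eN : N i k = m.+1 by apply/eqP; rewrite eqn_leq hN hge.
    rewrite /cs eN eqxx.
    case: pickP => [[t' v'] /andP [t'v'E /= h']|/(_ (t, v))]; last by rewrite tvE h.
    rewrite -/(rhs c t v i k); apply: (two_cross c0 cu) => //.
    move=> p q a b abE hab hpq; apply: crel => //.
    by rewrite -ltnS -eN.
Qed.

Fixpoint cgen (m : nat) : 'I_n -> 'I_n -> R :=
  match m with 0 => cz | m'.+1 => cs (cgen m') m' end.

Lemma Good_gen m : Good m (cgen m).
Proof. by elim: m => [|m IH] /=; [exact: Good0 | exact: Good_step]. Qed.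

Lemma existence : exists c, glued E Pa ca c.
Proof.
exists (cgen #|E|); case: (Good_gen #|E|) => c0 ccell cu crel.
split; first exact: ccell.
split; first exact: cu.
move=> i k t v tvE vtE h; exact: (crel _ _ _ _ tvE h (N_le i k)).
Qed.

Lemma uniqueness (c1 c2 : 'I_n -> 'I_n -> R) : glued E Pa ca c1 -> glued E Pa ca c2 ->
  forall i j, i != j -> c1 i j = c2 i j.
Proof.
case=> cell1 [u1 rel1] [cell2 [u2 rel2]].
suff H m : forall i j, (N i j <= m)%N -> i != j -> c1 i j = c2 i j.
  by move=> i j; apply: (H _ i j (N_le i j)).
elim: m => [|m IH] i j hN ij.
- move: hN; rewrite leqn0 => /eqP h0.
  have [a [ia ja]] := in_cell ij h0.
  by rewrite (cell1 a) ?(cell2 a).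
- case: (posnP (N i j)) => [h0|hpos].
  + have [a [ia ja]] := in_cell ij h0.
    by rewrite (cell1 a) ?(cell2 a).
  have [[t v]] : exists e, e \in [set e in E | crn i j e.1 e.2].
    by apply/card_gt0P.
  rewrite inE => /andP [tvE /= h].
  have vtE := hDsym hD tvE.
  have [N1 N2 N3 N4] := N_cross tvE h.
  case/andP: (mp (g_dist i j t v) h) => _ /andP [it /andP [iv /andP [jt /andP [jv tv]]]].
  have ih p q : (N p q < N i j)%N -> p != q -> c1 p q = c2 p q.
    by move=> hp pq; apply: IH pq; rewrite -ltnS; apply: leq_trans hN.
  rewrite (rel1 i j t v tvE vtE h) (rel2 i j t v tvE vtE h).
  rewrite (ih i t) ?(ih v j) ?(ih i v) ?(ih t j) ?(ih t v) ?(ih v t) //.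
  all: try by rewrite (NE _).
  all: try by rewrite N_sym.
  all: by rewrite ?eqoE 1?eq_sym.
Qed.

End Glue.

Local Open Scope ring_scope.

Lemma crn_ij (i k l : nat) : ~~ crn i k i l.
Proof. by apply/negP => h; move: (mp (g_dist i k i l) h); rewrite eqxx /= ?andbF. Qed.
Lemma crn_il (i k j : nat) : ~~ crn i k j i.
Proof. by apply/negP => h; move: (mp (g_dist i k j i) h); rewrite eqxx /= ?andbF. Qed.
Lemma crn_kl (i k j : nat) : ~~ crn i k j k.
Proof. by apply/negP => h; move: (mp (g_dist i k j k) h); rewrite eqxx /= ?andbF. Qed.
Lemma crn_jl (i k j : nat) : ~~ crn i k j j.
Proof. by apply/negP => h; move: (mp (g_dist i k j j) h); rewrite eqxx /= ?andbF. Qed.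
Lemma crn_kj' (i k l : nat) : ~~ crn i k k l.
Proof. by apply/negP => h; move: (mp (g_dist i k k l) h); rewrite eqxx /= ?andbF. Qed.
Lemma crn_id' (i j l : nat) : ~~ crn i i j l.
Proof. by apply/negP => h; move: (mp (g_dist i i j l) h); rewrite eqxx /= ?andbF. Qed.

Section Sep.
Variable n : nat.
Variable E : {set 'I_n * 'I_n}.
Hypothesis hD : dissection E.

Definition sepS (S : seq 'I_n) (e : 'I_n * 'I_n) : bool :=
  has (fun u : 'I_n => has (fun w : 'I_n => crn u w e.1 e.2) S) S.

Definition sigS (S : seq 'I_n) := #|[set e in E | sepS S e]|.

Lemma sepSP (S : seq 'I_n) (e : 'I_n * 'I_n) : reflect (exists u w : 'I_n, [/\ u \in S, w \in S & crn u w e.1 e.2]) (sepS S e).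
Proof.
apply: (iffP hasP) => [[u uS /hasP [w wS h]]|[u [w [uS wS h]]]].
- by exists u, w.
- by exists u => //; apply/hasP; exists w.
Qed.

Lemma nsepS (S : seq 'I_n) (t v : 'I_n) :
  (forall u w : 'I_n, u \in S -> w \in S -> u != t -> u != v -> w != t -> w != v -> ~~ crn u w t v) ->
  ~~ sepS S (t, v).
Proof.
move=> H; apply/negP => /sepSP [u [w [uS wS /= h]]].
case: (eqVneq u t) => [eu|ut]; first by move: h; rewrite eu (negbTE (crn_ij _ _ _)).
case: (eqVneq u v) => [eu|uv]; first by move: h; rewrite eu (negbTE (crn_il _ _ _)).
case: (eqVneq w t) => [ew|wt]; first by move: h; rewrite ew (negbTE (crn_kj' _ _ _)).
case: (eqVneq w v) => [ew|wv]; first by move: h; rewrite ew (negbTE (crn_kl _ _ _)).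
by move: (H u w uS wS ut uv wt wv); rewrite h.
Qed.

Lemma sigS_lt (S S' : seq 'I_n) (t v : 'I_n) : (t, v) \in E -> sepS S (t, v) -> ~~ sepS S' (t, v) ->
  (forall u : 'I_n, u \in S' -> [|| u \in S, u == t | u == v]) ->
  (sigS S' < sigS S)%N.
Proof.
move=> tvE hS hS' hsub; apply: proper_card; apply/properP; split; last first.
  by exists (t, v); rewrite !inE tvE /= ?hS ?(negbTE hS').
have vtE := hDsym hD tvE.
case/sepSP: hS => x1 [x2 [x1S x2S hx]].
have lift (u w : 'I_n) e1 e2 : (e1, e2) \in E -> u \in S -> ((w == t) || (w == v)) ->
    crn u w e1 e2 -> sepS S (e1, e2).
  move=> eE uS /orP [] /eqP -> h.
  - have ut : nat_of_ord u != nat_of_ord t.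
      by apply/eqP => e; move: h; rewrite e (negbTE (crn_id' _ _ _)).
    have uv : nat_of_ord u != nat_of_ord v.
      apply/eqP => e; move: h; rewrite e; apply/negP.
      by rewrite g_sym1; apply: (hDnc hD tvE eE).
    case/orP: (mp (mp (mp (g_P1 x1 x2 t v u) hx) ut) uv) => hr.
    + apply/sepSP; exists u, x1; split => //=.
      exact: (mp (mp (mp (g_P2 u x1 t v e1 e2) hr) h) (hDnc hD eE tvE)).
    + apply/sepSP; exists u, x2; split => //=.
      exact: (mp (mp (mp (g_P2 u x2 t v e1 e2) hr) h) (hDnc hD eE tvE)).
  - have ut : nat_of_ord u != nat_of_ord t.
      apply/eqP => e; move: h; rewrite e; apply/negP.
      exact: (hDnc hD tvE eE).
    have uv : nat_of_ord u != nat_of_ord v.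
      by apply/eqP => e; move: h; rewrite e (negbTE (crn_id' _ _ _)).
    have hx' : crn x1 x2 v t by rewrite -g_sym2.
    case/orP: (mp (mp (mp (g_P1 x1 x2 v t u) hx') uv) ut) => hr.
    + apply/sepSP; exists u, x1; split => //=.
      exact: (mp (mp (mp (g_P2 u x1 v t e1 e2) hr) h) (hDnc hD eE vtE)).
    + apply/sepSP; exists u, x2; split => //=.
      exact: (mp (mp (mp (g_P2 u x2 v t e1 e2) hr) h) (hDnc hD eE vtE)).
apply/subsetP => -[e1 e2]; rewrite !inE /= => /andP [eE /sepSP [u [w [uS wS /= h]]]].
rewrite eE /=.
case/or3P: (hsub u uS) => [uS0|ut|uv]; case/or3P: (hsub w wS) => [wS0|wt|wv].
- by apply/sepSP; exists u, w.
- by apply: (lift u w) => //; rewrite wt.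
- by apply: (lift u w) => //; rewrite wv orbT.
- by apply: (lift w u) => //; [rewrite ut | rewrite g_sym1].
- by move: h; rewrite (eqP ut) (eqP wt) (negbTE (crn_id' _ _ _)).
- by move: h; rewrite (eqP ut) (eqP wv); move: (hDnc hD tvE eE) => /negbTE ->.
- by apply: (lift w u) => //; [rewrite uv orbT | rewrite g_sym1].
- by move: h; rewrite (eqP uv) (eqP wt); move: (hDnc hD vtE eE) => /negbTE ->.
- by move: h; rewrite (eqP uv) (eqP wv) (negbTE (crn_id' _ _ _)).
Qed.

End Sep.

Section Fr.
Variable R : unitRingType.
Variables n kappa : nat.
Hypothesis hn : (2 < n)%N.
Variable E : {set 'I_n * 'I_n}.
Hypothesis hD : dissection E.
Variable Pa : 'I_kappa.+1 -> {set 'I_n}.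
Variable ca : 'I_kappa.+1 -> 'I_n -> 'I_n -> R.
Hypothesis hcell : forall Q : {set 'I_n}, cell E Q <-> exists a, Q = Pa a.
Hypothesis hfr : forall a, frieze (Pa a) (ca a).
Variable c : 'I_n -> 'I_n -> R.
Hypothesis hgl : glued E Pa ca c.
Hypothesis hu : forall i j, i != j -> c i j \is a GRing.unit.

Definition sg (p q : 'I_n) : bool := (q < p)%N.
Definition dd (p q : 'I_n) : R := if p == q then 0 else (-1) ^+ sg p q * c p q.

Lemma dd_eq p q : p != q -> dd p q = (-1) ^+ sg p q * c p q.
Proof. by rewrite /dd => /negbTE ->. Qed.

Lemma dd0 p : dd p p = 0.
Proof. by rewrite /dd eqxx. Qed.

Lemma dd_unit p q : p != q -> dd p q \is a GRing.unit.
Proof. by move=> pq; rewrite dd_eq // unitM2 ?hu // unitrX // unitrN1. Qed.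

Lemma neq_of (i j : 'I_n) : nat_of_ord i != nat_of_ord j -> i != j.
Proof. by []. Qed.

Lemma conv_cross (x y j l : 'I_n) : crn x y j l -> (cP dd j l x y <-> cP c j l x y).
Proof.
move=> h.
case/andP: (mp (g_dist x y j l) h) => xy /andP [xj /andP [xl /andP [yj /andP [yl jl]]]].
have nq (p q : 'I_n) : nat_of_ord p != nat_of_ord q -> dd p q = (-1) ^+ sg p q * c p q.
  by move=> pq; apply: dd_eq.
have nq' (p q : 'I_n) : nat_of_ord q != nat_of_ord p -> dd p q = (-1) ^+ sg p q * c p q.
  by move=> pq; apply: dd_eq; rewrite eq_sym.
apply: (cP_sign (s := sg)).
- exact: nq xy.
- exact: nq xj.
- exact: nq' jl.
- exact: nq' yl.
- exact: nq xl.
- exact: nq jl.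
- exact: nq' yj.
- by apply/eqP; rewrite /sg; exact: (mp (g_sgn1 x y j l) h).
- by apply/eqP; rewrite /sg; exact: (mp (g_sgn2 x y j l) h).
Qed.

Lemma conv_tri (x j l : 'I_n) : x != j -> x != l -> j != l ->
  (cP dd j l x x <-> c x j * (c l j)^-1 * c l x = c x l * (c j l)^-1 * c j x).
Proof.
move=> xj xl jl.
have nq' (p q : 'I_n) : q != p -> dd p q = (-1) ^+ sg p q * c p q.
  by move=> pq; apply: dd_eq; rewrite eq_sym.
apply: (cP_sign_tri (s := sg)).
- exact: dd0.
- exact: dd_eq xj.
- exact: nq' jl.
- exact: nq' xl.
- exact: dd_eq xl.
- exact: dd_eq jl.
- exact: nq' xj.
- apply/eqP; rewrite /sg.
  apply: (mp (g_sgn3 x j l)).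
  by rewrite (neq_nat xj) (neq_nat xl) (neq_nat jl).
Qed.

Lemma frieze_c a : frieze (Pa a) c.
Proof.
case: hgl => hc _; case: (hfr a) => f1 f2 f3.
have E' i j : i \in Pa a -> j \in Pa a -> i != j -> c i j = ca a i j by apply: hc.
split.
- by move=> i j ia ja ij; rewrite (E' i j) //; apply: f1.
- move=> i j k ia ja ka ij jk ik.
  rewrite (E' i j) ?(E' k j) ?(E' k i) ?(E' i k) ?(E' j k) ?(E' j i) //;
    try by rewrite eq_sym.
  exact: f2.
- move=> i j k l ia ja ka la h.
  case/andP: (mp (g_dist i k j l) h) => ik /andP [ij /andP [il /andP [kj /andP [kl jl]]]].
  have nq (p q : 'I_n) : p \in Pa a -> q \in Pa a -> nat_of_ord p != nat_of_ord q -> c p q = ca a p q.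
    by move=> pa qa pq; apply: E'.
  have nq' (p q : 'I_n) : p \in Pa a -> q \in Pa a -> nat_of_ord q != nat_of_ord p -> c p q = ca a p q.
    by move=> pa qa pq; apply: E' => //; rewrite eq_sym.
  rewrite (nq i k) // (nq i j) // (nq' l j) // (nq' l k) // (nq i l) // (nq j l) //.
  rewrite (nq' j k) //.
  exact: f3.
Qed.

Lemma L6 (Q : {set 'I_n}) (x y j l : 'I_n) : frieze Q c ->
  x \in Q -> y \in Q -> j \in Q -> l \in Q ->
  x != j -> x != l -> y != j -> y != l -> j != l -> cP dd j l x y.
Proof.
case=> f1 f2 f3 xQ yQ jQ lQ xj xl yj yl jl.
have tri (p q r : 'I_n) : p \in Q -> q \in Q -> r \in Q -> p != q -> p != r -> q != r ->
    cP dd q r p p.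
  move=> pQ qQ rQ pq pr qr; apply/(conv_tri pq pr qr).
  exact: (f2 p q r pQ qQ rQ pq qr pr).
have pto (p q r s : 'I_n) : p \in Q -> q \in Q -> r \in Q -> s \in Q -> crn p q r s ->
    cP dd r s p q.
  move=> pQ qQ rQ sQ h; apply/(conv_cross h).
  exact: (f3 p r q s pQ rQ qQ sQ h).
case: (eqVneq x y) => [<-|xy]; first exact: tri.
have hd : [&& nat_of_ord x != y, nat_of_ord x != j, nat_of_ord x != l,
            nat_of_ord y != j, nat_of_ord y != l & nat_of_ord j != l].
  by rewrite (neq_nat xy) (neq_nat xj) (neq_nat xl) (neq_nat yj) (neq_nat yl) (neq_nat jl).
case/or3P: (mp (g_match x y j l) hd) => h.
- exact: pto.
- apply: algA.
  + exact: dd0.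
  + by apply: dd_unit; rewrite eq_sym.
  + by apply: dd_unit; rewrite eq_sym.
  + exact: dd_unit.
  + exact: pto.
  + exact: tri.
- apply: cP_sym; apply: algA.
  + exact: dd0.
  + exact: dd_unit.
  + by apply: dd_unit; rewrite eq_sym.
  + exact: dd_unit.
  + exact: pto.
  + by apply: tri => //; rewrite eq_sym.
Qed.

Lemma wk (a b p q : 'I_n) : (a, b) \in E -> crn p q a b -> cP dd a b p q.
Proof.
move=> abE h; apply/(conv_cross h).
case: hgl => _ [_ rel]; exact: (rel p q a b abE (hDsym hD abE) h).
Qed.

Lemma base (x y j l : 'I_n) : (forall e, e \in E -> ~~ sepS [:: x; y; j; l] e) ->
  j != l -> cP dd j l x y.
Proof.
move=> hns jl.
case: (eqVneq x j) => [->|xj]; first by apply: cP_xj; rewrite ?dd0 ?dd_unit.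
case: (eqVneq x l) => [->|xl]; first by apply: cP_xl; rewrite ?dd0 ?dd_unit // eq_sym.
case: (eqVneq y j) => [->|yj]; first by apply: cP_yj; rewrite ?dd0 ?dd_unit // eq_sym.
case: (eqVneq y l) => [->|yl]; first by apply: cP_yl; rewrite ?dd0 ?dd_unit.
pose Xs := x |: (y |: (j |: [set l])).
have X3 : (2 < #|Xs|)%N.
  have sub : (x |: (j |: [set l])) \subset Xs.
    by apply/subsetP => u; rewrite !inE => /or3P [] ->; rewrite ?orbT.
  apply: leq_trans (subset_leq_card sub).
  by rewrite !cardsU1 cards1 !inE (negbTE xj) (negbTE xl) (negbTE jl).
have HX u w e : u \in Xs -> w \in Xs -> e \in E -> ~~ crn u w e.1 e.2.
  move=> uX wX eE; apply/negP => h; move: (hns e eE); apply/negP/negPn.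
  apply/sepSP; exists u, w; split => //.
  - by move: uX; rewrite !inE.
  - by move: wX; rewrite !inE.
have [a ea] := (hcell (vis E Xs)).1 (vis_cell hD X3 HX).
have inP u : u \in Xs -> u \in Pa a by rewrite -ea; apply/subsetP/sub_vis.
apply: (L6 (frieze_c a)) => //; apply: inP; rewrite !inE eqxx ?orbT //.
Qed.

Section Step.
Variables x y j l t v : 'I_n.
Let X := [:: x; y; j; l].
Hypothesis tvE : (t, v) \in E.
Hypothesis sepX : sepS X (t, v).
Hypothesis IHq : forall p q a b : 'I_n, (sigS E [:: p; q; a; b] < sigS E X)%N -> a != b ->
  cP dd a b p q.
Hypothesis jl : j != l.

Let inXtv (u : 'I_n) := [|| u \in X, u == t | u == v].

Lemma IH4 (p q a b : 'I_n) : inXtv p -> inXtv q -> inXtv a -> inXtv b ->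
  ~~ sepS [:: p; q; a; b] (t, v) -> a != b -> cP dd a b p q.
Proof.
move=> hp hq ha hb hs ab; apply: IHq ab.
apply: (sigS_lt hD tvE sepX hs).
move=> u; rewrite in_cons => /orP [/eqP -> //|].
rewrite in_cons => /orP [/eqP -> //|].
rewrite in_cons => /orP [/eqP -> //|].
by rewrite inE => /eqP ->.
Qed.

Lemma tv : t != v.
Proof. exact: (hDneq hD tvE). Qed.

Lemma inX_x : inXtv x. Proof. by rewrite /inXtv /X !inE eqxx. Qed.
Lemma inX_y : inXtv y. Proof. by rewrite /inXtv /X !inE eqxx ?orbT. Qed.
Lemma inX_j : inXtv j. Proof. by rewrite /inXtv /X !inE eqxx ?orbT. Qed.
Lemma inX_l : inXtv l. Proof. by rewrite /inXtv /X !inE eqxx ?orbT. Qed.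
Lemma inX_t : inXtv t. Proof. by rewrite /inXtv eqxx ?orbT. Qed.
Lemma inX_v : inXtv v. Proof. by rewrite /inXtv eqxx ?orbT. Qed.

Lemma nsep2 (p q : 'I_n) (S : seq 'I_n) :
  (forall u, u \in S -> [|| u == t, u == v, u == p | u == q]) ->
  ~~ crn p q t v ->
  ~~ sepS S (t, v).
Proof.
move=> hm hpq; apply: nsepS => u w uS wS ut uv wt wv.
move: (hm u uS) (hm w wS); rewrite (negbTE ut) (negbTE uv) (negbTE wt) (negbTE wv) /=.
move=> /orP [] /eqP -> /orP [] /eqP ->; rewrite ?crn_id' //.
by rewrite g_sym1.
Qed.

Lemma Hpair (p q : 'I_n) : inXtv p -> inXtv q -> cP dd t v p q.
Proof.
move=> hp hq.
case: (boolP (crn p q t v)) => h; first exact: wk.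
apply: IH4 => //; rewrite ?inX_t ?inX_v ?tv //.
apply: (@nsep2 p q) => // u.
rewrite in_cons => /orP [/eqP ->|]; first by rewrite eqxx ?orbT.
rewrite in_cons => /orP [/eqP ->|]; first by rewrite eqxx ?orbT.
rewrite in_cons => /orP [/eqP ->|]; first by rewrite eqxx ?orbT.
by rewrite inE => /eqP ->; rewrite eqxx ?orbT.
Qed.

Lemma nsep1 (p : 'I_n) (S : seq 'I_n) :
  (forall u, u \in S -> [|| u == t, u == v | u == p]) -> ~~ sepS S (t, v).
Proof.
move=> hm; apply: nsepS => u w uS wS ut uv wt wv.
move: (hm u uS) (hm w wS); rewrite (negbTE ut) (negbTE uv) (negbTE wt) (negbTE wv) /=.
by move=> /eqP -> /eqP ->; rewrite crn_id'.
Qed.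

Lemma Hjl_nc (a b : 'I_n) : inXtv a -> inXtv b -> (a == t) || (a == v) ->
  (b == t) || (b == v) -> ~~ crn j l t v -> cP dd j l a b.
Proof.
move=> ha hb hat hbt hc; apply: IH4 => //; rewrite ?inX_j ?inX_l //.
apply: (@nsep2 j l) => // u.
rewrite in_cons => /orP [/eqP ->|]; first by case/orP: hat => ->; rewrite ?orbT.
rewrite in_cons => /orP [/eqP ->|]; first by case/orP: hbt => ->; rewrite ?orbT.
rewrite in_cons => /orP [/eqP ->|]; first by rewrite eqxx ?orbT.
by rewrite inE => /eqP ->; rewrite eqxx ?orbT.
Qed.

Lemma tri_tv (a b : 'I_n) (p : 'I_n) : inXtv a -> a != t -> a != v ->
  ((b == t) && (p == v)) || ((b == v) && (p == t)) -> cP dd a b p p.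
Proof.
move=> ha at_ av hbp.
have hb : inXtv b by case/orP: hbp => /andP [/eqP -> _]; rewrite ?inX_t ?inX_v.
have hp : inXtv p by case/orP: hbp => /andP [_ /eqP ->]; rewrite ?inX_t ?inX_v.
apply: IH4 => //.
- apply: (@nsep1 a) => u.
  rewrite in_cons => /orP [/eqP ->|].
    by case/orP: hbp => /andP [_ /eqP ->]; rewrite eqxx ?orbT.
  rewrite in_cons => /orP [/eqP ->|].
    by case/orP: hbp => /andP [_ /eqP ->]; rewrite eqxx ?orbT.
  rewrite in_cons => /orP [/eqP ->|]; first by rewrite eqxx ?orbT.
  by rewrite inE => /eqP ->; case/orP: hbp => /andP [/eqP -> _]; rewrite eqxx ?orbT.
- by case/orP: hbp => /andP [/eqP -> _].
Qed.

Lemma Q4part : crn j l t v ->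
  [/\ cP dd j l t t, cP dd j l t v, cP dd j l v t & cP dd j l v v].
Proof.
move=> hc; have vtE := hDsym hD tvE.
case/andP: (mp (g_dist j l t v) hc) => jl' /andP [jt /andP [jv /andP [lt /andP [lv tv']]]].
have ujt : dd j t \is a GRing.unit by apply: dd_unit.
have ujv : dd j v \is a GRing.unit by apply: dd_unit.
have ult : dd l t \is a GRing.unit by apply: dd_unit.
have ulv : dd l v \is a GRing.unit by apply: dd_unit.
have utj : dd t j \is a GRing.unit by apply: dd_unit; rewrite eq_sym.
have uvj : dd v j \is a GRing.unit by apply: dd_unit; rewrite eq_sym.
have utl : dd t l \is a GRing.unit by apply: dd_unit; rewrite eq_sym.
have uvl : dd v l \is a GRing.unit by apply: dd_unit; rewrite eq_sym.
have ujl : dd j l \is a GRing.unit by apply: dd_unit.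
have ulj : dd l j \is a GRing.unit by apply: dd_unit; rewrite eq_sym.
have utv : dd t v \is a GRing.unit by apply: dd_unit; rewrite tv.
have uvt : dd v t \is a GRing.unit by apply: dd_unit; rewrite eq_sym tv.
have hc2 : crn l j t v by rewrite -g_sym1.
have hc3 : crn j l v t by rewrite -g_sym2.
have hc4 : crn l j v t by rewrite -g_sym1 -g_sym2.
have K6 : cP dd j t v v.
  by apply: tri_tv; [exact: inX_j | exact: jt | exact: jv | rewrite !eqxx].
have K8 : cP dd l t v v.
  by apply: tri_tv; [exact: inX_l | exact: lt | exact: lv | rewrite !eqxx].
have K6' : cP dd j v t t.
  by apply: tri_tv; [exact: inX_j | exact: jt | exact: jv | rewrite !eqxx orbT].
have K8' : cP dd l v t t.
  by apply: tri_tv; [exact: inX_l | exact: lt | exact: lv | rewrite !eqxx orbT].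
have [Htt Htv] := q4_main (dd0 t) (dd0 v) utv uvt ujt ult utj utl ulj ujl
        (wk tvE hc) (wk tvE hc2) K6 K8.
have [Hvv Hvt] := q4_main (dd0 v) (dd0 t) uvt utv ujv ulv uvj uvl ulj ujl
        (wk vtE hc3) (wk vtE hc4) K6' K8'.
by split.
Qed.

Lemma step : cP dd j l x y.
Proof.
have utv : dd t v \is a GRing.unit by apply: dd_unit; rewrite tv.
have uvt : dd v t \is a GRing.unit by apply: dd_unit; rewrite eq_sym tv.
have [Htt Htv Hvt Hvv] : [/\ cP dd j l t t, cP dd j l t v, cP dd j l v t & cP dd j l v v].
  case: (boolP (crn j l t v)) => hc; first exact: Q4part.
  by split; apply: Hjl_nc; rewrite ?inX_t ?inX_v ?eqxx ?orbT.
apply: (pivot_change (dd0 t) (dd0 v) utv uvt) => //; apply: Hpair;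
  by rewrite ?inX_x ?inX_y ?inX_j ?inX_l.
Qed.

End Step.

Lemma Rall m : forall x y j l : 'I_n, (sigS E [:: x; y; j; l] <= m)%N -> j != l ->
  cP dd j l x y.
Proof.
elim: m => [|m IH] x y j l hs jl.
- case: (boolP [exists e in E, sepS [:: x; y; j; l] e]) => [/exists_inP [e eE he]|hn0].
    have : (0 < sigS E [:: x; y; j; l])%N by apply/card_gt0P; exists e; rewrite inE eE.
    by rewrite lt0n; move: hs; rewrite leqn0 => ->.
  apply: base => // e eE; apply/negP => he; move/exists_inP: hn0; apply.
  by exists e.
- case: (boolP [exists e in E, sepS [:: x; y; j; l] e]) => [/exists_inP [[t v] tvE he]|hn0].
    apply: (step tvE he) => // p q a b hlt ab.
    by apply: IH => //; rewrite -ltnS; apply: leq_trans hlt hs.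
  apply: base => // e eE; apply/negP => he; move/exists_inP: hn0; apply.
  by exists e.
Qed.

Lemma sigS_le S : (sigS E S <= #|E|)%N.
Proof. by apply/subset_leq_card/subsetP => e; rewrite inE => /andP []. Qed.

Lemma frieze_all : frieze [set: 'I_n] c.
Proof.
split.
- by move=> i j _ _; apply: hu.
- move=> i j k _ _ _ ij jk ik.
  by apply/(conv_tri ij ik jk); apply: (Rall (sigS_le _)).
- move=> i j k l _ _ _ _ h.
  case/andP: (mp (g_dist i k j l) h) => _ /andP [_ /andP [_ /andP [_ /andP [_ jl]]]].
  by apply/(conv_cross h); apply: (Rall (sigS_le _)).
Qed.

End Fr.

Unset Implicit Arguments.
Theorem theoremD (R : unitRingType) (n kappa : nat)
  (E : {set 'I_n * 'I_n})
  (Pa : 'I_kappa.+1 -> {set 'I_n})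
  (ca : 'I_kappa.+1 -> 'I_n -> 'I_n -> R) :
  (3 <= n)%N ->
  dissection E ->
  #|E| = (2 * kappa)%N ->
  injective Pa ->
  (forall Q : {set 'I_n}, cell E Q <-> exists a, Q = Pa a) ->
  (forall a, frieze (Pa a) (ca a)) ->
  (forall a b t v, (t, v) \in E -> t \in Pa a -> v \in Pa a ->
     t \in Pa b -> v \in Pa b -> ca a t v = ca b t v) ->
  (exists c : 'I_n -> 'I_n -> R, glued E Pa ca c) /\
  (forall c1 c2 : 'I_n -> 'I_n -> R, glued E Pa ca c1 -> glued E Pa ca c2 ->
     forall i j, i != j -> c1 i j = c2 i j) /\
  (forall c : 'I_n -> 'I_n -> R, glued E Pa ca c ->
     (forall i j, i != j -> c i j \is a GRing.unit) ->
     frieze [set: 'I_n] c).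
Proof.
move=> hn hD _ hPa hcell hfr hcomp.
split; first exact: (existence hn hD hPa hcell hfr hcomp).
split; first exact: (uniqueness hn hD hcell).
move=> c hgl hu; exact: (frieze_all hD hcell hfr hgl hu).
Qed.
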